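(* Let $\mathcal{L}$ be a polar space and $f:\mathcal{L}\to\mathbf{R}\cup\{\infty\}$. The following are equivalent: (1) $f$ is submodular on $\mathcal{L}$; (2) $f(p)+f(q)\ge f(p\wedge q)+f(p\sqcup q)$ for all $p,q\in\mathcal{L}$; (3) $f$ is bisubmodular on each polar frame $\mathcal{F}\cong\mathcal{S}_2^n$, i.e., $f\circ\psi$ is bisubmodular on $\{-1,0,1\}^n$ for an isomorphism $\psi:\{-1,0,1\}^n\to\mathcal{F}$.
   Context: $\mathcal{S}_2=\{-1,0,1\}$ is the poset with minimum $0$ and incomparable $-1,1$; $\mathcal{S}_2^n$ has the componentwise order. A polar space of rank $n$ is a meet-semilattice $\mathcal{L}$ that is a union of subsemilattices (polar frames) such that (P0) each polar frame is isomorphic to $\mathcal{S}_2^n$; (P1) any two chains lie in a common polar frame; (P2) if polar frames $\mathcal{F},\mathcal{F}'$ both contain chains $C,D$, there is an isomorphism $\mathcal{F}\to\mathcal{F}'$ fixing $C,D$ pointwise. A polar space is a modular semilattice (meet-semilattice of finite rank with rank $r$, principal ideals modular lattices, $x\vee y\vee z$ exists whenever the pairwise joins exist). Left/right join: $p\vee_L q:=p\vee u$ for the unique maximal $u\in[p\wedge q,q]$ such that $p\vee u$ exists; $p\vee_R q:=q\vee v$ for the unique maximal $v\in[p\wedge q,p]$ such that $q\vee v$ exists. Pseudo join: $p\sqcup q:=(p\vee_L q)\wedge(p\vee_R q)$. Submodularity: for $p,q$ let $I(p,q)$ be the elements on shortest $p$–$q$ paths of the covering graph; $r(u;p,q)=(r(u\wedge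 p)-r(p\wedge q),r(u\wedge q)-r(p\wedge q))$; $\mathcal{E}(p,q)$ the $u\in I(p,q)$ with $r(u;p,q)$ a componentwise-maximal extreme point of the convex hull $\mathrm{Conv}I(p,q)$; $C(u;p,q)=\{w\in\mathbf{R}^2_{\ge0}:\langle w,r(u;p,q)\rangle=\max_{z\in\mathrm{Conv}I(p,q)}\langle w,z\rangle\}=\{(x,y)\ge0:y\cos\alpha\le x\sin\alpha,\ y\cos\beta\ge x\sin\beta\}$ ($0\le\beta\le\alpha\le\pi/2$), $[C]=\frac{\sin\alpha}{\sin\alpha+\cos\alpha}-\frac{\sin\beta}{\sin\beta+\cos\beta}$. $f$ is submodular if $f(p)+f(q)\ge f(p\wedge q)+\sum_{u\in\mathcal{E}(p,q)}[C(u;p,q)]f(u)$ for all $p,q$ (zero-coefficient terms omitted; $a+\infty=\infty$). Bisubmodular: $h:\{-1,0,1\}^n\to\mathbf{R}\cup\{\infty\}$ is bisubmodular if $h(x)+h(y)\ge h(x\sqcap y)+h(x\sqcup y)$, where componentwise $x_i\sqcap y_i=x_i$ if $x_i=y_i$ and $0$ otherwise, and $x_i\sqcup y_i$ is the larger of $x_i,y_i$ if they are comparable and $0$ if $\{x_i,y_i\}=\{-1,1\}$. *)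

(* Defs.v *)
From Stdlib Require Import Reals List ClassicalEpsilon.
From mathcomp Require Import ssreflect ssrfun ssrbool eqtype ssrnat fintype.

Set Implicit Arguments.
Unset Strict Implicit.

Local Open Scope R_scope.

(* ---------- R ∪ {∞}: None = +∞ ---------- *)
Definition ER := option R.

Definition addE (a b : ER) : ER :=
  match a, b with Some x, Some y => Some (x + y) | _, _ => None end.

Definition leE (a b : ER) : Prop :=
  match b with
  | None => True
  | Some y => match a with None => False | Some x => x <= y end
  end.

Definition scaleE (c : R) (a : ER) : ER :=
  match a with Some x => Some (c * x) | None => None end.

Fixpoint sumE (l : list ER) : ER :=
  match l with nil => Some 0 | a :: l' => addE a (sumE l') end.

Inductive S2 : Type := Sm | S0 | Sp .

Definition S2_le (a b : S2) : Prop := a = S0 \/ a = b.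

Definition S2n (n : nat) := 'I_n -> S2.

Definition S2n_le (n : nat) (x y : S2n n) : Prop := forall i, S2_le (x i) (y i).

Definition s2meet (a b : S2) : S2 :=
  match a, b with
  | Sm, Sm => Sm | Sp, Sp => Sp | S0, S0 => S0 | _, _ => S0 end.

Definition s2join (a b : S2) : S2 :=
  match a, b with
  | S0, b => b | a, S0 => a | Sm, Sm => Sm | Sp, Sp => Sp | _, _ => S0 end.

Definition S2n_meet (n : nat) (x y : S2n n) : S2n n := fun i => s2meet (x i) (y i).
Definition S2n_join (n : nat) (x y : S2n n) : S2n n := fun i => s2join (x i) (y i).

Definition bisubmodular (n : nat) (h : S2n n -> ER) : Prop :=
  forall x y : S2n n,
    leE (addE (h (S2n_meet x y)) (h (S2n_join x y))) (addE (h x) (h y)).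

Section PolarSpace.
Variables (T : Type) (le : T -> T -> Prop) (meet : T -> T -> T).

Definition lt (x y : T) : Prop := le x y /\ x <> y.

Definition is_meet_semilattice : Prop :=
  (forall x, le x x) /\
  (forall x y, le x y -> le y x -> x = y) /\
  (forall x y z, le x y -> le y z -> le x z) /\
  (forall x y, le (meet x y) x /\ le (meet x y) y /\
               forall z, le z x -> le z y -> le z (meet x y)).

Definition is_chain (C : T -> Prop) : Prop :=
  forall x y, C x -> C y -> le x y \/ le y x.

Definition frame_iso (n : nat) (F : T -> Prop) (psi : S2n n -> T) : Prop :=
  (forall x, F (psi x)) /\
  (forall y, F y -> exists x, psi x = y) /\
  (forall x y, le (psi x) (psi y) <-> S2n_le x y).

Definition sub_iso (F F' : T -> Prop) (phi : T -> T) : Prop :=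
  (forall x, F x -> F' (phi x)) /\
  (forall y, F' y -> exists x, F x /\ phi x = y) /\
  (forall x y, F x -> F y -> (le (phi x) (phi y) <-> le x y)).

Definition is_polar_space (n : nat) (Frame : (T -> Prop) -> Prop) : Prop :=
  is_meet_semilattice /\
  (forall x, exists F, Frame F /\ F x) /\
  (forall F, Frame F -> forall x y, F x -> F y -> F (meet x y)) /\
  (forall F, Frame F -> exists psi, @frame_iso n F psi) /\
  (* (P1) *)
  (forall C D, is_chain C -> is_chain D ->
     exists F, Frame F /\ (forall x, C x -> F x) /\ (forall x, D x -> F x)) /\
  (* (P2) *)
  (forall F F' C D, Frame F -> Frame F' -> is_chain C -> is_chain D ->
     (forall x, C x -> F x /\ F' x) -> (forall x, D x -> F x /\ F' x) ->
     exists phi, sub_iso F F' phi /\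
       (forall x, C x -> phi x = x) /\ (forall x, D x -> phi x = x)).

Definition is_join (x y z : T) : Prop :=
  le x z /\ le y z /\ forall w, le x w -> le y w -> le z w.

Definition has_join (x y : T) : Prop := exists z, is_join x y z.

Definition joinL_spec (p q z : T) : Prop :=
  exists u, le (meet p q) u /\ le u q /\ has_join p u /\
    (forall v, le (meet p q) v -> le v q -> has_join p v -> le u v -> u = v) /\
    is_join p u z.

Definition joinL (p q : T) : T := epsilon (inhabits p) (joinL_spec p q).

Definition joinR_spec (p q z : T) : Prop :=
  exists v, le (meet p q) v /\ le v p /\ has_join q v /\
    (forall w, le (meet p q) w -> le w p -> has_join q w -> le v w -> v = w) /\
    is_join q v z.

Definition joinR (p q : T) : T := epsilon (inhabits p) (joinR_spec p q).

Definition pjoin (p q : T) : T := meet (joinL p q) (joinR p q).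

Fixpoint desc (x : T) (l : list T) : Prop :=
  match l with nil => True | y :: l' => lt y x /\ desc y l' end.

Definition is_rank (x : T) (k : nat) : Prop :=
  (exists l, length l = k /\ desc x l) /\
  (forall l, desc x l -> (length l <= k)%nat).

Definition rk (x : T) : nat := epsilon (inhabits 0%nat) (is_rank x).

Definition covers (x y : T) : Prop :=
  lt x y /\ ~ (exists z, lt x z /\ lt z y).

Definition adj (x y : T) : Prop := covers x y \/ covers y x.

Fixpoint walk (x : T) (l : list T) (q : T) : Prop :=
  match l with nil => x = q | y :: l' => adj x y /\ walk y l' q end.

Definition shortest_walk (p : T) (l : list T) (q : T) : Prop :=
  walk p l q /\ forall l', walk p l' q -> (length l <= length l')%nat.

Definition Ipq (p q u : T) : Prop :=
  exists l, shortest_walk p l q /\ (u = p \/ In u l).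

Definition rvec (p q u : T) : R * R :=
  (INR (rk (meet u p)) - INR (rk (meet p q)),
   INR (rk (meet u q)) - INR (rk (meet p q))).

(* convex hull of the finite point set { r(u;p,q) | u in I(p,q) } *)
Fixpoint conv_sum (l : list (R * T)) (p q : T) : R * R :=
  match l with
  | nil => (0, 0)
  | (t, u) :: l' => let s := conv_sum l' p q in
                    (t * fst (rvec p q u) + fst s, t * snd (rvec p q u) + snd s)
  end.

Definition ConvI (p q : T) (z : R * R) : Prop :=
  exists l : list (R * T),
    (forall t u, In (t, u) l -> 0 <= t /\ Ipq p q u) /\
    fold_right Rplus 0 (map fst l) = 1 /\
    z = conv_sum l p q.

Definition extreme_point (K : R * R -> Prop) (z : R * R) : Prop :=
  K z /\ forall a b t, K a -> K b -> 0 < t < 1 ->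
    z = (t * fst a + (1 - t) * fst b, t * snd a + (1 - t) * snd b) -> a = z /\ b = z.

Definition cw_maximal (K : R * R -> Prop) (z : R * R) : Prop :=
  K z /\ forall z', K z' -> fst z <= fst z' -> snd z <= snd z' -> z' = z.

Definition Epq (p q u : T) : Prop :=
  Ipq p q u /\ extreme_point (ConvI p q) (rvec p q u) /\
  cw_maximal (ConvI p q) (rvec p q u).

Definition dot (w z : R * R) : R := fst w * fst z + snd w * snd z.

Definition Cone (p q u : T) (w : R * R) : Prop :=
  0 <= fst w /\ 0 <= snd w /\
  forall z, ConvI p q z -> dot w z <= dot w (rvec p q u).

End PolarSpace.

Definition angle_cone (a b : R) (w : R * R) : Prop :=
  0 <= fst w /\ 0 <= snd w /\
  snd w * cos a <= fst w * sin a /\ snd w * cos b >= fst w * sin b.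

Definition cone_coeff (C : R * R -> Prop) : R :=
  let ab := epsilon (inhabits (0, 0))
              (fun ab : R * R => 0 <= snd ab /\ snd ab <= fst ab /\ fst ab <= PI / 2 /\
                 forall w, C w <-> angle_cone (fst ab) (snd ab) w) in
  sin (fst ab) / (sin (fst ab) + cos (fst ab)) -
  sin (snd ab) / (sin (snd ab) + cos (snd ab)).

Section Submod.
Variables (T : Type) (le : T -> T -> Prop) (meet : T -> T -> T).

Definition sm_term (f : T -> ER) (p q u : T) : ER :=
  let c := cone_coeff (Cone le meet p q u) in
  if Req_EM_T c 0 then Some 0 else scaleE c (f u).

(* submodularity; the sum over E(p,q) is taken along any duplicate-free
   enumeration of E(p,q) *)
Definition submodular (f : T -> ER) : Prop :=
  forall p q (l : list T), NoDup l -> (forall u, In u l <-> Epq le meet p q u) ->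
    leE (addE (f (meet p q)) (sumE (map (sm_term f p q) l))) (addE (f p) (f q)).

Definition pjoin_submodular (f : T -> ER) : Prop :=
  forall p q, leE (addE (f (meet p q)) (f (pjoin le meet p q))) (addE (f p) (f q)).

Definition frame_bisubmodular (n : nat) (Frame : (T -> Prop) -> Prop) (f : T -> ER) : Prop :=
  forall F, Frame F -> exists psi, @frame_iso T le n F psi /\
    bisubmodular (fun x : S2n n => f (psi x)).

End Submod.

(* Main.v *)
Require Import Defs.
From Stdlib Require Import Reals List Lia Lra ClassicalEpsilon Classical FunctionalExtensionality.
From mathcomp Require Import ssreflect ssrfun ssrbool eqtype ssrnat fintype bigop.
From mathcomp Require Import zify.

Set Implicit Arguments.
Unset Strict Implicit.

Definition nz (a : S2) : bool := match a with S0 => false | _ => true end.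
Definition conf (a b : S2) : bool :=
  match a, b with Sm, Sp | Sp, Sm => true | _, _ => false end.
Definition dd (a b : S2) : nat :=
  match a, b with
  | S0, S0 => 0 | S0, _ => 1 | _, S0 => 1
  | Sm, Sm => 0 | Sp, Sp => 0 | _, _ => 2 end.

Section S2n.
Variable n : nat.
Implicit Types x y z : S2n n.

Definition sz x : nat := \sum_(i < n) nz (x i).
Definition cc x y : nat := \sum_(i < n) conf (x i) (y i).
Definition DD x y : nat := \sum_(i < n) dd (x i) (y i).
Definition compat x y : Prop := forall i, conf (x i) (y i) = false.
Definition jL x y : S2n n := fun i => match x i with S0 => y i | a => a end.
Definition u0 x y : S2n n := fun i => if conf (x i) (y i) then S0 else y i.

Lemma S2n_ext x y : (forall i, x i = y i) -> x = y.
Proof. intros; apply functional_extensionality; auto. Qed.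

Lemma S2n_le_refl x : S2n_le x x.
Proof. intros i; right; auto. Qed.
Lemma S2n_le_trans x y z : S2n_le x y -> S2n_le y z -> S2n_le x z.
Proof. intros H1 H2 i; unfold S2_le; destruct (H1 i), (H2 i); [left; auto|left; auto|left; congruence|right; congruence]. Qed.
Lemma S2n_le_antisym x y : S2n_le x y -> S2n_le y x -> x = y.
Proof. intros H1 H2; apply S2n_ext; intros i; destruct (H1 i), (H2 i); congruence. Qed.

Ltac s2c := repeat match goal with
  | |- context [match ?a with _ => _ end] => destruct a eqn:?
  | H : context [match ?a with _ => _ end] |- _ => destruct a eqn:?
  end.

Lemma meet_le_l x y : S2n_le (S2n_meet x y) x.
Proof. intros i; unfold S2n_meet, S2_le, s2meet; destruct (x i), (y i); auto. Qed.
Lemma meet_le_r x y : S2n_le (S2n_meet x y) y.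
Proof. intros i; unfold S2n_meet, S2_le, s2meet; destruct (x i), (y i); auto. Qed.
Lemma smeet_glb x y z : S2n_le z x -> S2n_le z y -> S2n_le z (S2n_meet x y).
Proof. intros H1 H2 i; specialize (H1 i); specialize (H2 i); unfold S2n_meet, s2meet in *;
  unfold S2_le in *; destruct (x i), (y i), (z i); intuition (try discriminate; auto). Qed.

Lemma ub_compat x y z : S2n_le x z -> S2n_le y z -> compat x y.
Proof. intros H1 H2 i; specialize (H1 i); specialize (H2 i);
  unfold S2_le in *; destruct (x i), (y i), (z i); intuition (try discriminate; auto). Qed.

Lemma join_ub_l x y : compat x y -> S2n_le x (S2n_join x y).
Proof. intros H i; specialize (H i); unfold S2n_join, S2_le, s2join;
  destruct (x i), (y i); simpl in *; auto; discriminate. Qed.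
Lemma join_ub_r x y : compat x y -> S2n_le y (S2n_join x y).
Proof. intros H i; specialize (H i); unfold S2n_join, S2_le, s2join;
  destruct (x i), (y i); simpl in *; auto; discriminate. Qed.
Lemma join_lub x y z : S2n_le x z -> S2n_le y z -> S2n_le (S2n_join x y) z.
Proof. intros H1 H2 i; specialize (H1 i); specialize (H2 i); unfold S2n_join, s2join in *;
  unfold S2_le in *; destruct (x i), (y i), (z i); intuition (try discriminate; auto). Qed.

Lemma compat3 x y z : compat x y -> compat x z -> compat y z ->
  exists w, S2n_le x w /\ S2n_le y w /\ S2n_le z w.
Proof.
  intros H1 H2 H3. exists (S2n_join (S2n_join x y) z).
  assert (H4 : compat (S2n_join x y) z).
  { intros i; specialize (H1 i); specialize (H2 i); specialize (H3 i);
    unfold S2n_join, s2join; destruct (x i), (y i), (z i); simpl in *; auto. }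
  split; [|split].
  - exact (S2n_le_trans (join_ub_l H1) (join_ub_l H4)).
  - exact (S2n_le_trans (join_ub_r H1) (join_ub_l H4)).
  - exact (join_ub_r H4).
Qed.

Lemma u0_le x y : S2n_le (u0 x y) y.
Proof. intros i; unfold u0, S2_le; destruct (conf (x i) (y i)); auto. Qed.
Lemma u0_ge x y : S2n_le (S2n_meet x y) (u0 x y).
Proof. intros i; unfold u0, S2n_meet, S2_le, s2meet; destruct (x i), (y i); simpl; auto. Qed.
Lemma u0_compat x y : compat x (u0 x y).
Proof. intros i; unfold u0; destruct (x i), (y i); simpl; auto. Qed.
Lemma u0_max x y v : S2n_le v y -> compat x v -> S2n_le v (u0 x y).
Proof. intros H1 H2 i; specialize (H2 i); unfold u0, S2_le; destruct (H1 i) as [e|e]; rewrite e; auto.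
  rewrite e in H2; rewrite H2; auto. Qed.
Lemma join_u0 x y : S2n_join x (u0 x y) = jL x y.
Proof. apply S2n_ext; intros i; unfold S2n_join, u0, jL, s2join; destruct (x i), (y i); simpl; auto. Qed.

Lemma jL_meet_x x y : S2n_meet (jL x y) x = x.
Proof. apply S2n_ext; intros i; unfold S2n_meet, jL, s2meet; destruct (x i), (y i); simpl; auto. Qed.
Lemma jL_meet_y x y : S2n_meet (jL x y) y = u0 x y.
Proof. apply S2n_ext; intros i; unfold S2n_meet, jL, u0, s2meet; destruct (x i), (y i); simpl; auto. Qed.
Lemma jL_meet_jR x y : S2n_meet (jL x y) (jL y x) = S2n_join x y.
Proof. apply S2n_ext; intros i; unfold S2n_meet, jL, S2n_join, s2meet, s2join; destruct (x i), (y i); simpl; auto. Qed.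
Lemma jL_jL x y : jL (jL x y) (jL y x) = jL x y.
Proof. apply S2n_ext; intros i; unfold jL; destruct (x i), (y i); simpl; auto. Qed.
Lemma join_join x y : S2n_join x (S2n_join x y) = jL x y.
Proof. apply S2n_ext; intros i; unfold S2n_join, jL, s2join; destruct (x i), (y i); simpl; auto. Qed.
Lemma join_Ma x y : S2n_join (S2n_meet x (S2n_join x y)) y = jL y x.
Proof. apply S2n_ext; intros i; unfold S2n_join, S2n_meet, jL, s2join, s2meet; destruct (x i), (y i); simpl; auto. Qed.
Lemma meet_Ma x y : S2n_meet (S2n_meet x (S2n_join x y)) y = S2n_meet x y.
Proof. apply S2n_ext; intros i; unfold S2n_join, S2n_meet, s2join, s2meet; destruct (x i), (y i); simpl; auto. Qed.
Lemma compat_jL x y : compat x y -> jL x y = S2n_join x y.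
Proof. intros H; apply S2n_ext; intros i; specialize (H i); unfold S2n_join, jL, s2join; destruct (x i), (y i); simpl in *; auto; discriminate. Qed.
Lemma compat_jR x y : compat x y -> jL y x = S2n_join x y.
Proof. intros H; apply S2n_ext; intros i; specialize (H i); unfold S2n_join, jL, s2join; destruct (x i), (y i); simpl in *; auto; discriminate. Qed.
Lemma ncompat_LR x y : ~ compat x y -> ~ compat (jL x y) (jL y x).
Proof. intros H H'; apply H; intros i; specialize (H' i); unfold jL in H'; destruct (x i), (y i); simpl in *; auto. Qed.
Lemma jL_ge x y : S2n_le x (jL x y).
Proof. intros i; unfold jL, S2_le; destruct (x i); auto. Qed.
Lemma meet_comm_s x y : S2n_meet x y = S2n_meet y x.
Proof. apply S2n_ext; intros i; unfold S2n_meet, s2meet; destruct (x i), (y i); auto. Qed.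
Lemma jL_neq x y : ~ compat x y -> jL x y <> jL y x.
Proof. intros H E; apply H; intros i; assert (E' := f_equal (fun g => g i) E); simpl in E';
  unfold jL in E'; destruct (x i) eqn:?, (y i) eqn:?; simpl; auto; discriminate. Qed.

Lemma sum_eq (F G : 'I_n -> nat) : (forall i, F i = G i) -> \sum_(i < n) F i = \sum_(i < n) G i.
Proof. intros H; apply eq_bigr; auto. Qed.
Lemma sum_le (F G : 'I_n -> nat) : (forall i, F i <= G i) -> \sum_(i < n) F i <= \sum_(i < n) G i.
Proof. intros H; apply leq_sum; auto. Qed.
Lemma sum_lt (F G : 'I_n -> nat) j : (forall i, F i <= G i) -> F j < G j ->
  \sum_(i < n) F i < \sum_(i < n) G i.
Proof. intros H Hj. rewrite (bigD1 j) // (bigD1 j (F := G)) //=.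
  have : \sum_(i < n | xpredT i && (i != j)) F i <= \sum_(i < n | xpredT i && (i != j)) G i.
  { apply leq_sum; intros; auto. }
  move=> Hs. have := leq_add Hj Hs. rewrite addSn. auto. Qed.
Lemma sum_add (F G : 'I_n -> nat) : \sum_(i < n) (F i + G i) = \sum_(i < n) F i + \sum_(i < n) G i.
Proof. apply big_split. Qed.

Lemma sum_upd (F G : 'I_n -> nat) j : (forall i, i != j -> F i = G i) ->
  \sum_(i < n) F i + G j = \sum_(i < n) G i + F j.
Proof. intros H. rewrite (bigD1 j) // (bigD1 j (F := G)) //=.
  rewrite (eq_bigr G (P := fun i => xpredT i && (i != j))); [|intros i Hi; apply H; move: Hi => /andP [_ Hi]; auto].
  rewrite /=. move: (\sum_(i < n | i != j) G i) => S. lia. Qed.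

Lemma sz_le x y : S2n_le x y -> sz x <= sz y.
Proof. intros H; apply sum_le; intros i; destruct (H i) as [e|e]; rewrite e; auto; destruct (y i); auto. Qed.
Lemma sz_lt x y : S2n_le x y -> x <> y -> sz x < sz y.
Proof. intros H Hne. destruct (classic (exists j, x j <> y j)) as [[j Hj]|Hn].
  - apply (sum_lt (j := j)); [intros i; destruct (H i) as [e|e]; rewrite e; auto; destruct (y i); auto|].
    destruct (H j) as [e|e]; [|congruence]. rewrite e in Hj |- *; destruct (y j) eqn:Ey; simpl in *; auto; congruence.
  - exfalso; apply Hne; apply S2n_ext; intros i; apply NNPP; intros C; apply Hn; eauto. Qed.
Lemma sz_eq_le x y : S2n_le x y -> sz x = sz y -> x = y.
Proof. intros H E; destruct (classic (x = y)) as [|C]; auto; have := sz_lt H C; lia. Qed.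

Lemma DD_eq x y : DD x y + (sz (S2n_meet x y) + sz (S2n_meet x y)) = sz x + sz y.
Proof. unfold DD, sz; rewrite -!sum_add; apply sum_eq; intros i; unfold S2n_meet, s2meet;
  destruct (x i), (y i); auto. Qed.
Lemma sz_modular x y : compat x y -> sz x + sz y = sz (S2n_meet x y) + sz (S2n_join x y).
Proof. intros H; unfold sz; rewrite -!sum_add; apply sum_eq; intros i; specialize (H i);
  unfold S2n_meet, s2meet, S2n_join, s2join; destruct (x i), (y i); simpl in *; auto; discriminate. Qed.
Lemma sz_u0 x y : sz (u0 x y) + cc x y = sz y.
Proof. unfold sz, cc; rewrite -!sum_add; apply sum_eq; intros i; unfold u0;
  destruct (x i), (y i); auto. Qed.
Lemma sz_jL x y : sz (jL x y) + sz (S2n_meet x y) + cc x y = sz x + sz y.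
Proof. unfold sz, cc; rewrite -!sum_add; apply sum_eq; intros i; unfold jL, S2n_meet, s2meet;
  destruct (x i), (y i); auto. Qed.
Lemma DD_jL x y : DD x (jL x y) + DD (jL x y) y = DD x y.
Proof. unfold DD; rewrite -!sum_add; apply sum_eq; intros i; unfold jL; destruct (x i), (y i); auto. Qed.
Lemma cc_pos x y : ~ compat x y -> 0 < cc x y.
Proof. intros H. destruct (classic (exists j, conf (x j) (y j) = true)) as [[j Hj]|Hn].
  - have := sum_lt (F := fun _ => 0) (G := fun i => nat_of_bool (conf (x i) (y i))) (j := j).
    unfold cc. rewrite big1 //. intros X; apply X; auto. rewrite Hj; auto.
  - exfalso; apply H; intros i; destruct (conf (x i) (y i)) eqn:E; auto; exfalso; eauto. Qed.
Lemma cc_zero x y : compat x y -> cc x y = 0.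
Proof. intros H; unfold cc; rewrite big1 //; intros i _; rewrite H; auto. Qed.
Lemma bound_s x y a b : S2n_le a x -> S2n_le b y -> compat a b ->
  sz (S2n_join a b) + cc x y + sz (S2n_meet x y) <= sz x + sz y.
Proof. intros H1 H2 H3; unfold sz, cc; rewrite -!sum_add; apply sum_le; intros i;
  specialize (H3 i); unfold S2n_join, s2join, S2n_meet, s2meet;
  destruct (H1 i) as [e1|e1], (H2 i) as [e2|e2]; rewrite ?e1 ?e2 in H3 |- *;
  destruct (x i), (y i); simpl in *; auto; discriminate. Qed.

Lemma between x y : S2n_le x y -> sz x + 2 <= sz y ->
  exists z, S2n_le x z /\ S2n_le z y /\ x <> z /\ z <> y.
Proof.
  intros H Hs. destruct (classic (exists j, x j <> y j)) as [[j Hj]|Hn].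
  2:{ assert (x = y) by (apply S2n_ext; intros i; apply NNPP; intros C; apply Hn; eauto). subst; lia. }
  set z := fun i => if (i == j) then y i else x i.
  assert (Hxz : S2n_le x z).
  { intros i; unfold z; destruct (i == j) eqn:E; [ apply H | right; auto]. }
  assert (Hzy : S2n_le z y).
  { intros i; unfold z; destruct (i == j) eqn:E; [ right; auto | apply H]. }
  exists z; split; [|split; [|split]]; auto.
  - intros E; apply Hj; rewrite E; unfold z; rewrite eqxx; auto.
  - intros E. have : sz x + 1 = sz z.
    { have := @sum_upd (fun i => nat_of_bool (nz (x i))) (fun i => nat_of_bool (nz (z i))) j.
      unfold sz. intros X. have := X ltac:(intros i Hi; unfold z; rewrite (negbTE Hi); auto).
      unfold z; rewrite eqxx.
      destruct (H j) as [e|e]; [|congruence]. rewrite e in Hj |- *; destruct (y j); simpl in *; try lia; congruence. }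
    rewrite E; lia.
Qed.

Lemma step x y : x <> y -> exists x',
  ((S2n_le x x' /\ sz x' = sz x + 1) \/ (S2n_le x' x /\ sz x = sz x' + 1)) /\
  DD x' y + 1 = DD x y.
Proof.
  intros Hne.
  destruct (classic (exists j, nz (x j) = true /\ x j <> y j)) as [[j [Hj1 Hj2]]|Hn].
  - set x' := fun i => if (i == j) then S0 else x i.
    exists x'. split; [right; split|].
    + intros i; unfold x'; destruct (i == j); [left|right]; auto.
    + have := @sum_upd (fun i => nat_of_bool (nz (x i))) (fun i => nat_of_bool (nz (x' i))) j.
      unfold sz. intros X. have := X ltac:(intros i Hi; unfold x'; rewrite (negbTE Hi); auto).
      unfold x'; rewrite eqxx Hj1 /=. lia.
    + have := @sum_upd (fun i => dd (x i) (y i)) (fun i => dd (x' i) (y i)) j.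
      unfold DD. intros X. have := X ltac:(intros i Hi; unfold x'; rewrite (negbTE Hi); auto).
      unfold x'; rewrite eqxx.
      destruct (x j), (y j); simpl in *; try congruence; lia.
  - destruct (classic (exists j, x j <> y j)) as [[j Hj]|Hn2].
    2:{ exfalso; apply Hne; apply S2n_ext; intros i; apply NNPP; intros C; apply Hn2; eauto. }
    assert (Hxj : x j = S0).
    { destruct (x j) eqn:E; auto; exfalso; apply Hn; exists j; rewrite E; auto. }
    set x' := fun i => if (i == j) then y j else x i.
    exists x'. split; [left; split|].
    + intros i; unfold x'; destruct (i == j) eqn:E; [left; move: E => /eqP ->|right]; auto.
    + have := @sum_upd (fun i => nat_of_bool (nz (x i))) (fun i => nat_of_bool (nz (x' i))) j.
      unfold sz. intros X. have := X ltac:(intros i Hi; unfold x'; rewrite (negbTE Hi); auto).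
      unfold x'; rewrite eqxx Hxj /=.
      rewrite Hxj in Hj; destruct (y j); simpl; try congruence; lia.
    + have := @sum_upd (fun i => dd (x i) (y i)) (fun i => dd (x' i) (y i)) j.
      unfold DD. intros X. have := X ltac:(intros i Hi; unfold x'; rewrite (negbTE Hi); auto).
      unfold x'; rewrite eqxx Hxj.
      rewrite Hxj in Hj; destruct (y j); simpl in *; try congruence; lia.
Qed.

Lemma DD_zero x y : DD x y = 0 -> x = y.
Proof. intros H; apply S2n_ext; intros i. apply NNPP; intros C.
  have := sum_lt (F := fun _ => 0) (G := fun i => dd (x i) (y i)) (j := i).
  rewrite big1 //. unfold DD in H; rewrite H. intros X; have := X (fun _ => leq0n _).
  destruct (x i), (y i); simpl; try congruence; intros Y; have := Y is_true_true; lia. Qed.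

Fixpoint sd (top : S2n n) (l : list (S2n n)) : Prop :=
  match l with nil => True | y :: l' => S2n_le y top /\ y <> top /\ sd y l' end.
Lemma sdesc x : exists ls : list (S2n n), length ls = sz x /\ sd x ls.
Proof.
  remember (sz x) as k eqn:Hk; revert x Hk; induction k as [|k IH]; intros x Hk.
  - exists nil; simpl; auto.
  - assert (Hex : exists j, nz (x j) = true).
    { apply NNPP; intros C. have : sz x = 0; [|lia]. unfold sz; rewrite big1 //; intros i _.
      destruct (nz (x i)) eqn:E; auto; exfalso; eauto. }
    destruct Hex as [j Hj].
    set x' := fun i => if (i == j) then S0 else x i.
    assert (Hle : S2n_le x' x) by (intros i; unfold x'; destruct (i == j); [left|right]; auto).
    assert (Hsz : sz x = sz x' + 1).
    { have := @sum_upd (fun i => nat_of_bool (nz (x i))) (fun i => nat_of_bool (nz (x' i))) j.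
      unfold sz. intros X. have := X ltac:(intros i Hi; unfold x'; rewrite (negbTE Hi); auto).
      unfold x'; rewrite eqxx Hj /=. lia. }
    destruct (IH x' ltac:(lia)) as [ls [H1 H2]].
    exists (x' :: ls); simpl; split; [lia|split; [auto|split; auto]].
    intros E; rewrite E in Hsz; lia.
Qed.

End S2n.

Lemma cc_comm n (x y : S2n n) : cc x y = cc y x.
Proof. unfold cc; apply sum_eq; intros i; destruct (x i), (y i); auto. Qed.
Lemma DD_comm n (x y : S2n n) : DD x y = DD y x.
Proof. unfold DD; apply sum_eq; intros i; destruct (x i), (y i); auto. Qed.


Unset Implicit Arguments.
Module RealPart.
Local Open Scope R_scope.
Lemma sin_pos_q x : 0 < x <= PI/2 -> 0 < sin x.
Proof. intros [H1 H2]; apply sin_gt_0; [lra| have := PI_RGT_0; lra]. Qed.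

Lemma ang_range_sin x : 0 <= x <= PI/2 -> 0 <= sin x.
Proof. intros [H1 H2]; apply sin_ge_0; [lra| have := PI_RGT_0; lra]. Qed.
Lemma ang_range_cos x : 0 <= x <= PI/2 -> 0 <= cos x.
Proof. intros [H1 H2]; apply cos_ge_0; have := PI_RGT_0; lra. Qed.

Lemma angle_cone_uniq a b a' b' :
  0 <= b <= a -> a <= PI/2 -> 0 <= b' <= a' -> a' <= PI/2 ->
  (forall w, angle_cone a b w <-> angle_cone a' b' w) -> a = a' /\ b = b'.
Proof.
  assert (key : forall a b a' b', 0 <= b <= a -> a <= PI/2 -> 0 <= b' <= a' -> a' <= PI/2 ->
     (forall w, angle_cone a b w -> angle_cone a' b' w) -> a <= a' /\ b' <= b).
  { intros a0 b0 a1 b1 H1 H2 H3 H4 H.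
    have Ha := H (cos a0, sin a0). have Hb := H (cos b0, sin b0).
    unfold angle_cone in Ha, Hb; simpl in Ha, Hb.
    have := ang_range_sin a0 ltac:(lra). have := ang_range_cos a0 ltac:(lra).
    have := ang_range_sin b0 ltac:(lra). have := ang_range_cos b0 ltac:(lra).
    have Hs := ang_range_sin (a0 - b0) ltac:(lra). rewrite sin_minus in Hs.
    split.
    - destruct (Rle_dec a0 a1) as [|C]; auto.
      have Hp := sin_pos_q (a0 - a1) ltac:(lra). rewrite sin_minus in Hp.
      destruct Ha as [_ [_ [Hc _]]]; [repeat split; lra|]. lra.
    - destruct (Rle_dec b1 b0) as [|C]; auto.
      have Hp := sin_pos_q (b1 - b0) ltac:(lra). rewrite sin_minus in Hp.
      destruct Hb as [_ [_ [_ Hc]]]; [repeat split; lra|]. lra. }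
  intros H1 H2 H3 H4 H.
  destruct (key a b a' b' H1 H2 H3 H4 (fun w => proj1 (H w))).
  destruct (key a' b' a b H3 H4 H1 H2 (fun w => proj2 (H w))). split; lra.
Qed.

Definition gq (x : R) := sin x / (sin x + cos x).

Lemma cone_coeff_val (C : R * R -> Prop) a b :
  0 <= b <= a -> a <= PI/2 -> (forall w, C w <-> angle_cone a b w) ->
  cone_coeff C = gq a - gq b.
Proof.
  intros H1 H2 H. unfold cone_coeff.
  set ab := epsilon _ _.
  assert (Hab : 0 <= snd ab /\ snd ab <= fst ab /\ fst ab <= PI / 2 /\
                 forall w, C w <-> angle_cone (fst ab) (snd ab) w).
  { apply epsilon_spec. exists (a, b); simpl; split; [lra|split; [lra|split; [lra|exact H]]]. }
  destruct Hab as [Q1 [Q2 [Q3 Q4]]].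
  destruct (@angle_cone_uniq (fst ab) (snd ab) a b ltac:(lra) Q3 H1 H2) as [E1 E2].
  - intros w; rewrite <- Q4; apply H.
  - unfold gq; rewrite E1 E2; auto.
Qed.

Lemma gq_0 : gq 0 = 0.
Proof. unfold gq; rewrite sin_0 cos_0; field. Qed.
Lemma gq_PI2 : gq (PI/2) = 1.
Proof. unfold gq; rewrite sin_PI2 cos_PI2; field. Qed.
Lemma gq_PI4 : gq (PI/4) = 1/2.
Proof. unfold gq; rewrite sin_PI4 cos_PI4. have := sqrt_lt_R0 2 ltac:(lra). intros; field; lra. Qed.

Lemma PI4_bounds : 0 <= PI/4 /\ PI/4 <= PI/2.
Proof. have := PI_RGT_0; lra. Qed.

Lemma ac_PI4_0 w : angle_cone (PI/4) 0 w <-> 0 <= fst w /\ 0 <= snd w /\ snd w <= fst w.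
Proof.
  unfold angle_cone. rewrite sin_PI4 cos_PI4 sin_0 cos_0.
  have := sqrt_lt_R0 2 ltac:(lra). intros Hs. have Hi : 0 < 1 / sqrt 2 by (apply Rdiv_lt_0_compat; lra).
  split; intros [H1 [H2 H3]]; repeat split; auto; try nra; try lra.
Qed.

Lemma ac_PI2_PI4 w : angle_cone (PI/2) (PI/4) w <-> 0 <= fst w /\ 0 <= snd w /\ fst w <= snd w.
Proof.
  unfold angle_cone. rewrite sin_PI4 cos_PI4 sin_PI2 cos_PI2.
  have := sqrt_lt_R0 2 ltac:(lra). intros Hs. have Hi : 0 < 1 / sqrt 2 by (apply Rdiv_lt_0_compat; lra).
  split; intros [H1 [H2 H3]]; repeat split; auto; try nra; try lra.
Qed.

Lemma ac_PI2_0 w : angle_cone (PI/2) 0 w <-> 0 <= fst w /\ 0 <= snd w.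
Proof.
  unfold angle_cone. rewrite sin_PI2 cos_PI2 sin_0 cos_0.
  split; [intros [H1 [H2 _]]; split; auto| intros [H1 H2]; repeat split; lra].
Qed.

End RealPart.
Import RealPart.
Set Implicit Arguments.

Lemma eps_unique A (i : inhabited A) (P : A -> Prop) a :
  P a -> (forall z, P z -> z = a) -> epsilon i P = a.
Proof. intros Ha Hu. apply Hu. apply epsilon_spec. eauto. Qed.

Section PS.
Variables (T : Type) (le : T -> T -> Prop) (meet : T -> T -> T) (n : nat)
  (Frame : (T -> Prop) -> Prop).
Hypothesis HL : is_polar_space le meet n Frame.

Lemma le_refl x : le x x.
Proof. destruct HL as [[H _] _]; auto. Qed.
Lemma le_antisym x y : le x y -> le y x -> x = y.
Proof. destruct HL as [[_ [H _]] _]; auto. Qed.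
Lemma le_trans x y z : le x y -> le y z -> le x z.
Proof. destruct HL as [[_ [_ [H _]]] _]; eauto. Qed.
Lemma meet_l x y : le (meet x y) x.
Proof. destruct HL as [[_ [_ [_ H]]] _]; apply H. Qed.
Lemma meet_r x y : le (meet x y) y.
Proof. destruct HL as [[_ [_ [_ H]]] _]; apply H. Qed.
Lemma meet_glb x y z : le z x -> le z y -> le z (meet x y).
Proof. destruct HL as [[_ [_ [_ H]]] _]; apply H. Qed.
Lemma meet_comm x y : meet x y = meet y x.
Proof. apply le_antisym; apply meet_glb; auto using meet_l, meet_r. Qed.
Lemma meet_id x y : le x y -> meet x y = x.
Proof. intros; apply le_antisym; [apply meet_l| apply meet_glb; auto using le_refl]. Qed.
Lemma mclosed F : Frame F -> forall x y, F x -> F y -> F (meet x y).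
Proof. destruct HL as [_ [_ [H _]]]. exact (H F). Qed.
Lemma P0 F : Frame F -> exists psi : S2n n -> T, frame_iso le F psi.
Proof. destruct HL as [_ [_ [_ [H _]]]]; exact (H F). Qed.
Lemma P1 C D : is_chain le C -> is_chain le D ->
  exists F, Frame F /\ (forall x, C x -> F x) /\ (forall x, D x -> F x).
Proof. destruct HL as [_ [_ [_ [_ [H _]]]]]; auto. Qed.
Lemma P2 F F' C D : Frame F -> Frame F' -> is_chain le C -> is_chain le D ->
     (forall x, C x -> F x /\ F' x) -> (forall x, D x -> F x /\ F' x) ->
     exists phi, sub_iso le F F' phi /\
       (forall x, C x -> phi x = x) /\ (forall x, D x -> phi x = x).
Proof. destruct HL as [_ [_ [_ [_ [_ H]]]]]; auto. Qed.

Lemma chain1 a : is_chain le (fun z => z = a).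
Proof. intros x y -> ->; left; apply le_refl. Qed.
Arguments chain1 : clear implicits.
Lemma chain2 a b : le a b -> is_chain le (fun z => z = a \/ z = b).
Proof. intros H x y [->| ->] [->| ->]; auto using le_refl. Qed.
Lemma chain3 a b c : le a b -> le b c -> is_chain le (fun z => z = a \/ z = b \/ z = c).
Proof. intros H1 H2 x y [->|[->| ->]] [->|[->| ->]]; eauto using le_refl, le_trans. Qed.

Section FI.
Variables (F : T -> Prop) (psi : S2n n -> T).
Hypothesis HF : Frame F.
Hypothesis Hpsi : frame_iso le F psi.
Lemma fi_in x : F (psi x).
Proof. apply Hpsi. Qed.
Lemma fi_surj y : F y -> exists x, psi x = y.
Proof. apply Hpsi. Qed.
Lemma fi_le x y : le (psi x) (psi y) <-> S2n_le x y.
Proof. apply Hpsi. Qed.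
Lemma fi_inj x y : psi x = psi y -> x = y.
Proof. intros E; apply S2n_le_antisym; apply fi_le; rewrite E; apply le_refl. Qed.
Lemma fi_meet x y : meet (psi x) (psi y) = psi (S2n_meet x y).
Proof.
  destruct (fi_surj (mclosed HF (fi_in x) (fi_in y))) as [z Hz]. rewrite -Hz. f_equal.
  apply S2n_le_antisym.
  - apply smeet_glb; apply fi_le; rewrite Hz; auto using meet_l, meet_r.
  - apply fi_le; rewrite Hz; apply meet_glb; apply fi_le; auto using meet_le_l, meet_le_r.
Qed.
End FI.

Section SI.
Variables (F F' : T -> Prop) (phi : T -> T).
Hypothesis Hphi : sub_iso le F F' phi.
Lemma si_in x : F x -> F' (phi x).
Proof. apply Hphi. Qed.
Lemma si_surj y : F' y -> exists x, F x /\ phi x = y.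
Proof. apply Hphi. Qed.
Lemma si_le x y : F x -> F y -> (le (phi x) (phi y) <-> le x y).
Proof. apply Hphi. Qed.
End SI.

Lemma frame2 a b : exists F, Frame F /\ F a /\ F b.
Proof. destruct (P1 (chain1 a) (chain1 b)) as [F [HF [H1 H2]]]; exists F; auto. Qed.

Lemma frame_of2 a b : exists F (psi : S2n n -> T) x y,
  Frame F /\ frame_iso le F psi /\ psi x = a /\ psi y = b.
Proof. destruct (frame2 a b) as [F [HF [Ha Hb]]]. destruct (P0 HF) as [psi Hpsi].
  destruct (fi_surj Hpsi Ha) as [x Hx]; destruct (fi_surj Hpsi Hb) as [y Hy].
  exists F, psi, x, y; auto. Qed.

Lemma ub_frame F x y w : Frame F -> F x -> F y -> le x w -> le y w ->
  exists w', F w' /\ le x w' /\ le y w'.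
Proof.
  intros HF Hx Hy H1 H2.
  destruct (P1 (chain2 H1) (chain1 y)) as [F' [HF' [HC HD]]].
  destruct (@P2 F' F (fun z => z = x) (fun z => z = y) HF' HF (chain1 x) (chain1 y))
    as [phi [Hphi [Hc Hd]]].
  - intros z ->; split; auto.
  - intros z ->; split; auto.
  - exists (phi w); split; [apply (si_in Hphi); auto|].
    split.
    + rewrite -{1}(Hc x erefl). apply (si_le Hphi); auto.
    + rewrite -{1}(Hd y erefl). apply (si_le Hphi); auto.
Qed.

Lemma join_frame F (psi : S2n n -> T) x y : Frame F -> frame_iso le F psi -> compat x y ->
  is_join le (psi x) (psi y) (psi (S2n_join x y)).
Proof.
  intros HF Hpsi Hc. set J := S2n_join x y.
  assert (HxJ : le (psi x) (psi J)) by (apply (fi_le Hpsi); apply join_ub_l; auto).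
  assert (HyJ : le (psi y) (psi J)) by (apply (fi_le Hpsi); apply join_ub_r; auto).
  split; [auto|split; [auto|]].
  intros w Hxw Hyw.
  destruct (P1 (chain2 Hxw) (chain2 HyJ)) as [F' [HF' [HC HD]]].
  destruct (@P2 F F' _ _ HF HF' (chain2 HxJ) (chain2 HyJ)) as [phi [Hphi [Hc1 Hd1]]].
  - intros z Hz; destruct Hz as [Hz|Hz]; subst z; (split; [apply (fi_in Hpsi)| solve [apply HC; auto | apply HD; auto]]).
  - intros z Hz; destruct Hz as [Hz|Hz]; subst z; (split; [apply (fi_in Hpsi)| solve [apply HC; auto | apply HD; auto]]).
  - destruct (si_surj Hphi (HC w (or_intror erefl))) as [v [Hv Hvw]].
    destruct (fi_surj Hpsi Hv) as [v' Hv']. subst v w.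
    assert (E1 : phi (psi x) = psi x) by auto.
    assert (E2 : phi (psi y) = psi y) by auto.
    assert (E3 : phi (psi J) = psi J) by auto.
    assert (Hx' : le (psi x) (psi v')).
    { apply (si_le Hphi (fi_in Hpsi x) Hv). rewrite E1; auto. }
    assert (Hy' : le (psi y) (psi v')).
    { apply (si_le Hphi (fi_in Hpsi y) Hv). rewrite E2; auto. }
    rewrite -E3. apply (si_le Hphi (fi_in Hpsi J) Hv).
    apply (fi_le Hpsi) in Hx'; apply (fi_le Hpsi) in Hy'. apply (fi_le Hpsi).
    apply join_lub; auto.
Qed.

Lemma join_uniq a b z z' : is_join le a b z -> is_join le a b z' -> z = z'.
Proof. intros [H1 [H2 H3]] [H1' [H2' H3']]; apply le_antisym; auto. Qed.

Lemma hj_compat F (psi : S2n n -> T) x y : Frame F -> frame_iso le F psi ->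
  has_join le (psi x) (psi y) -> compat x y.
Proof.
  intros HF Hpsi [z [H1 [H2 _]]].
  destruct (ub_frame HF (fi_in Hpsi x) (fi_in Hpsi y) H1 H2) as [w [Hw [H3 H4]]].
  destruct (fi_surj Hpsi Hw) as [w' <-].
  apply (fi_le Hpsi) in H3; apply (fi_le Hpsi) in H4. eapply ub_compat; eauto.
Qed.

Lemma hj_join F (psi : S2n n -> T) x y z : Frame F -> frame_iso le F psi ->
  is_join le (psi x) (psi y) z -> z = psi (S2n_join x y).
Proof.
  intros HF Hpsi Hj. assert (Hc : compat x y) by (apply (hj_compat HF Hpsi); exists z; auto).
  eapply join_uniq; eauto. exact (join_frame HF Hpsi Hc).
Qed.

Lemma ub_hj a b w : le a w -> le b w -> has_join le a b.
Proof.
  intros H1 H2. destruct (frame_of2 a b) as [F [psi [x [y [HF [Hpsi [<- <-]]]]]]].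
  destruct (ub_frame HF (fi_in Hpsi x) (fi_in Hpsi y) H1 H2) as [w' [Hw [H3 H4]]].
  destruct (fi_surj Hpsi Hw) as [w'' <-].
  apply (fi_le Hpsi) in H3; apply (fi_le Hpsi) in H4.
  exists (psi (S2n_join x y)); apply (join_frame HF Hpsi). eapply ub_compat; eauto.
Qed.

Lemma triple v w s p : is_join le v w s -> has_join le p v -> has_join le p w ->
  has_join le p s.
Proof.
  intros Hs [zv Hzv] Hpw.
  destruct Hs as [Hvs [Hws Hsl]]. destruct Hzv as [Hpz [Hvz Hzl]].
  destruct (P1 (chain2 Hws) (chain2 Hpz)) as [F [HF [HC HD]]].
  destruct (P0 HF) as [psi Hpsi].
  destruct (fi_surj Hpsi (HC w (or_introl erefl))) as [W HW].
  destruct (fi_surj Hpsi (HC s (or_intror erefl))) as [S HS].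
  destruct (fi_surj Hpsi (HD p (or_introl erefl))) as [P HP].
  destruct (fi_surj Hpsi (HD zv (or_intror erefl))) as [Z HZ].
  subst w s p zv.
  assert (Hc1 : compat P (S2n_meet S Z)).
  { apply ub_compat with Z; [apply (fi_le Hpsi); auto| apply meet_le_r]. }
  assert (Hc2 : compat (S2n_meet S Z) W).
  { apply ub_compat with S; [apply meet_le_l| apply (fi_le Hpsi); auto]. }
  assert (Hc3 : compat P W) by (apply (hj_compat HF Hpsi); auto).
  destruct (compat3 Hc1 Hc3 Hc2) as [E [HE1 [HE2 HE3]]].
  apply ub_hj with (psi E); [apply (fi_le Hpsi); auto|].
  apply Hsl; [|apply (fi_le Hpsi); auto].
  apply le_trans with (psi (S2n_meet S Z)); [|apply (fi_le Hpsi); auto].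
  rewrite -(fi_meet HF Hpsi). apply meet_glb; auto.
Qed.

Section Frm.
Variables (F : T -> Prop) (psi : S2n n -> T).
Hypothesis HF : Frame F.
Hypothesis Hpsi : frame_iso le F psi.

Lemma u0_max_L x y v : le v (psi y) -> has_join le (psi x) v ->
  le v (psi (u0 x y)).
Proof.
  intros Hvq Hpv. set U := psi (u0 x y).
  assert (HUq : le U (psi y)) by (apply (fi_le Hpsi); apply u0_le).
  destruct (ub_hj Hvq HUq) as [s Hs].
  assert (HpU : has_join le (psi x) U).
  { exists (psi (S2n_join x (u0 x y))); apply (join_frame HF Hpsi); apply u0_compat. }
  destruct (triple Hs Hpv HpU) as [z Hz].
  destruct Hs as [Hvs [HUs Hsl]].
  assert (Hsq : le s (psi y)) by auto.
  destruct Hz as [Hpz [Hsz _]].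
  destruct (P1 (chain3 HUs Hsq) (chain2 Hpz)) as [F' [HF' [HC HD]]].
  destruct (@P2 F F' (fun z => z = U \/ z = psi y) (fun z => z = psi x) HF HF'
     (chain2 HUq) (chain1 (psi x))) as [phi [Hphi [Hc1 Hd1]]].
  - intros w [->| ->]; split; [apply (fi_in Hpsi)| apply HC; auto| apply (fi_in Hpsi)| apply HC; auto].
  - intros w ->; split; [apply (fi_in Hpsi)| apply HD; auto].
  - destruct (si_surj Hphi (HC s ltac:(auto))) as [s1 [Hs1 Es1]].
    destruct (si_surj Hphi (HD z ltac:(auto))) as [z1 [Hz1 Ez1]].
    destruct (fi_surj Hpsi Hs1) as [s' Hs']. destruct (fi_surj Hpsi Hz1) as [z' Hz'].
    subst s1 z1.
    assert (E1 : phi U = U) by auto.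
    assert (E2 : phi (psi y) = psi y) by auto.
    assert (E3 : phi (psi x) = psi x) by auto.
    assert (H1 : le (psi s') (psi y)).
    { apply (si_le Hphi (fi_in Hpsi s') (fi_in Hpsi y)). rewrite E2 Es1; auto. }
    assert (H2 : le (psi s') (psi z')).
    { apply (si_le Hphi (fi_in Hpsi s') (fi_in Hpsi z')). rewrite Es1 Ez1; auto. }
    assert (H3 : le (psi x) (psi z')).
    { apply (si_le Hphi (fi_in Hpsi x) (fi_in Hpsi z')). rewrite E3 Ez1; auto. }
    apply (fi_le Hpsi) in H1; apply (fi_le Hpsi) in H2; apply (fi_le Hpsi) in H3.
    assert (H4 : S2n_le s' (u0 x y)) by (apply u0_max; auto; eapply ub_compat; eauto).
    apply le_trans with s; auto. rewrite -Es1 -E1.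
    apply (si_le Hphi (fi_in Hpsi s') (fi_in Hpsi _)). apply (fi_le Hpsi); auto.
Qed.

Lemma joinL_char x y z :
  joinL_spec le meet (psi x) (psi y) z <-> z = psi (jL x y).
Proof.
  set U := psi (u0 x y).
  assert (HUq : le U (psi y)) by (apply (fi_le Hpsi); apply u0_le).
  assert (HmU : le (meet (psi x) (psi y)) U).
  { rewrite (fi_meet HF Hpsi). apply (fi_le Hpsi); apply u0_ge. }
  assert (HJ : is_join le (psi x) U (psi (jL x y))).
  { rewrite -join_u0. apply (join_frame HF Hpsi); apply u0_compat. }
  split.
  - intros [u [H1 [H2 [H3 [H4 H5]]]]].
    assert (Hu : le u U) by (apply u0_max_L; auto).
    assert (u = U) by (apply H4; auto; exists (psi (jL x y)); auto). subst u.
    eapply join_uniq; eauto.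
  - intros ->. exists U; split; [auto|split; [auto|split; [exists (psi (jL x y)); auto|split; [|auto]]]].
    intros v Hv1 Hv2 Hv3 Hv4. apply le_antisym; auto. apply u0_max_L; auto.
Qed.

Lemma joinL_frame x y : joinL le meet (psi x) (psi y) = psi (jL x y).
Proof. apply eps_unique; [apply joinL_char; auto| intros z; apply joinL_char]. Qed.

Lemma joinR_frame x y : joinR le meet (psi x) (psi y) = psi (jL y x).
Proof.
  assert (Hs : forall z, joinR_spec le meet (psi x) (psi y) z <-> z = psi (jL y x)).
  { intros z; rewrite -joinL_char. unfold joinR_spec, joinL_spec. rewrite (meet_comm (psi x)). tauto. }
  apply eps_unique; [apply Hs; auto| intros z; apply Hs].
Qed.

Lemma pjoin_frame x y : pjoin le meet (psi x) (psi y) = psi (S2n_join x y).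
Proof. unfold pjoin; rewrite joinL_frame joinR_frame (fi_meet HF Hpsi) jL_meet_jR; auto. Qed.

End Frm.

Lemma pjoin_iff_frame (f : T -> ER) :
  pjoin_submodular le meet f <-> frame_bisubmodular le n Frame f.
Proof.
  split.
  - intros H F HF. destruct (P0 HF) as [psi Hpsi]. exists psi; split; auto.
    intros x y. specialize (H (psi x) (psi y)).
    rewrite (fi_meet HF Hpsi) (pjoin_frame HF Hpsi) in H. exact H.
  - intros H p q. destruct (frame2 p q) as [F [HF [Hp Hq]]].
    destruct (H F HF) as [psi [Hpsi Hb]].
    destruct (fi_surj Hpsi Hp) as [x <-]. destruct (fi_surj Hpsi Hq) as [y <-].
    rewrite (fi_meet HF Hpsi) (pjoin_frame HF Hpsi). apply Hb.
Qed.

Lemma desc_le top l : desc le top l -> forall z, In z l -> le z top.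
Proof.
  revert top; induction l as [|y l IH]; intros top H z Hz; [destruct Hz|].
  destruct H as [[Hy _] H]. destruct Hz as [<-|Hz]; auto. apply le_trans with y; auto.
Qed.

Lemma desc_chain top l : desc le top l -> is_chain le (fun z => z = top \/ In z l).
Proof.
  revert top; induction l as [|y l IH]; intros top H.
  - intros a b [->|[]] [->|[]]; left; apply le_refl.
  - assert (Hall := desc_le H). destruct H as [[Hy _] H]. specialize (IH y H).
    intros a b Ha Hb.
    destruct Ha as [->|Ha]; [right; destruct Hb as [->|Hb]; [apply le_refl| apply Hall; auto]|].
    destruct Hb as [->|Hb]; [left; apply Hall; auto|].
    apply IH; destruct Ha as [<-|Ha]; destruct Hb as [<-|Hb]; auto.
Qed.

Lemma desc_map F F' phi top l : sub_iso le F F' phi -> F top -> (forall z, In z l -> F z) ->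
  desc le top l -> desc le (phi top) (map phi l) /\ (forall z, In z (map phi l) -> F' z).
Proof.
  intros Hphi. revert top; induction l as [|y l IH]; intros top Ht Hl H; simpl; [split; auto; intros z []|].
  destruct H as [[Hy Hne] H].
  destruct (IH y (Hl y (or_introl erefl)) (fun z Hz => Hl z (or_intror Hz)) H) as [IH1 IH2].
  split.
  { split; [split|].
    - apply (si_le Hphi (Hl y (or_introl erefl)) Ht); auto.
    - intros E. apply Hne. apply le_antisym; auto. apply (si_le Hphi Ht (Hl y (or_introl erefl))).
      rewrite E; apply le_refl.
    - exact IH1. }
  intros z [<-|Hz]; [apply (si_in Hphi (Hl y (or_introl erefl)))| apply IH2; auto].
Qed.

Lemma desc_frame_bound F (psi : S2n n -> T) : frame_iso le F psi ->
  forall l x, (forall z, In z l -> F z) -> desc le (psi x) l -> length l <= sz x.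
Proof.
  intros Hpsi l; induction l as [|y l IH]; intros x Hl H; simpl; [lia|].
  destruct H as [[Hy Hne] H].
  destruct (fi_surj Hpsi (Hl y (or_introl erefl))) as [y' <-].
  have := IH y' (fun z Hz => Hl z (or_intror Hz)) H.
  have := sz_lt (proj1 (fi_le Hpsi y' x) Hy) (fun E => Hne (f_equal psi E)). lia.
Qed.

Lemma rank_frame F (psi : S2n n -> T) x : Frame F -> frame_iso le F psi ->
  is_rank le (psi x) (sz x).
Proof.
  intros HF Hpsi. split.
  - destruct (sdesc x) as [ls [Hlen Hsd]]. exists (map psi ls); split; [rewrite map_length; auto|].
    clear Hlen; revert x Hsd; induction ls as [|y ls IH]; intros x Hsd; simpl; auto.
    destruct Hsd as [H1 [H2 H3]]. split; [split|]; auto.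
    + apply (fi_le Hpsi); auto.
    + intros E; apply H2; apply (fi_inj Hpsi); auto.
  - intros l Hl.
    destruct (P1 (desc_chain Hl) (desc_chain Hl)) as [F' [HF' [HC _]]].
    destruct (@P2 F' F _ _ HF' HF (chain1 (psi x)) (chain1 (psi x))) as [phi [Hphi [Hc _]]].
    + intros z ->; split; [apply HC; auto| apply (fi_in Hpsi)].
    + intros z ->; split; [apply HC; auto| apply (fi_in Hpsi)].
    + destruct (desc_map Hphi (HC _ (or_introl erefl)) (fun z Hz => HC z (or_intror Hz)) Hl) as [D1 D2].
      rewrite Hc in D1; auto. have := desc_frame_bound Hpsi D2 D1. rewrite map_length; auto.
Qed.

Lemma is_rank_uniq a k1 k2 : is_rank le a k1 -> is_rank le a k2 -> k1 = k2.
Proof.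
  intros [[l1 [E1 D1]] B1] [[l2 [E2 D2]] B2].
  have := B1 _ D2. have := B2 _ D1. lia.
Qed.

Lemma rk_frame F (psi : S2n n -> T) : Frame F -> frame_iso le F psi -> forall x, rk le (psi x) = sz x.
Proof.
  intros HF Hpsi x. apply eps_unique; [apply (rank_frame x HF Hpsi)|].
  intros k Hk; apply (is_rank_uniq Hk (rank_frame x HF Hpsi)).
Qed.

Lemma frame_le a b : le a b -> exists F (psi : S2n n -> T) x y,
  Frame F /\ frame_iso le F psi /\ psi x = a /\ psi y = b /\ S2n_le x y.
Proof.
  intros H. destruct (frame_of2 a b) as [F [psi [x [y [HF [Hpsi [Ha Hb]]]]]]].
  exists F, psi, x, y; split; [auto|split; [auto|split; [auto|split; [auto|]]]]. apply (fi_le Hpsi); rewrite Ha Hb; auto.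
Qed.

Lemma rk_mono a b : le a b -> rk le a <= rk le b.
Proof.
  intros H. destruct (frame_le H) as [F [psi [x [y [HF [Hpsi [<- [<- Hxy]]]]]]]].
  rewrite !(rk_frame HF Hpsi). apply sz_le; auto.
Qed.

Lemma rk_strict a b : le a b -> a <> b -> rk le a < rk le b.
Proof.
  intros H Hne. destruct (frame_le H) as [F [psi [x [y [HF [Hpsi [<- [<- Hxy]]]]]]]].
  rewrite !(rk_frame HF Hpsi). apply sz_lt; auto. intros E; apply Hne; subst; auto.
Qed.

Lemma rk_eq a b : le a b -> rk le a = rk le b -> a = b.
Proof. intros H E. destruct (classic (a = b)) as [|C]; auto. have := rk_strict H C. lia. Qed.

Lemma covers_rk a b : covers le a b -> rk le b = rk le a + 1.
Proof.
  intros [[H Hne] Hno]. destruct (frame_le H) as [F [psi [x [y [HF [Hpsi [Ha [Hb Hxy]]]]]]]].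
  subst a b. rewrite !(rk_frame HF Hpsi).
  have Hlt := sz_lt Hxy (fun E => Hne (f_equal psi E)).
  destruct (leqP (sz x + 2) (sz y)) as [Hge|Hlt2]; [|lia].
  exfalso. destruct (between Hxy Hge) as [z [H1 [H2 [H3 H4]]]].
  apply Hno; exists (psi z); split; split.
  - apply (fi_le Hpsi); auto.
  - intros E; apply H3; apply (fi_inj Hpsi); auto.
  - apply (fi_le Hpsi); auto.
  - intros E; apply H4; apply (fi_inj Hpsi); auto.
Qed.

Lemma rk_covers a b : le a b -> rk le b = rk le a + 1 -> covers le a b.
Proof.
  intros H E. split; [split; auto; intros ->; lia|].
  intros [z [[H1 H2] [H3 H4]]]. have := rk_strict H1 H2. have := rk_strict H3 H4. lia.
Qed.

Definition Dst a b := (rk le a - rk le (meet a b)) + (rk le b - rk le (meet a b)).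

Lemma Dst_frame F (psi : S2n n -> T) : Frame F -> frame_iso le F psi ->
  forall x y, Dst (psi x) (psi y) = DD x y.
Proof.
  intros HF Hpsi x y. unfold Dst. rewrite (fi_meet HF Hpsi) !(rk_frame HF Hpsi).
  have := DD_eq x y. have := sz_le (meet_le_l x y). have := sz_le (meet_le_r x y). lia.
Qed.

Lemma Dst_comm a b : Dst a b = Dst b a.
Proof. unfold Dst; rewrite meet_comm; lia. Qed.

Lemma Dst_self a : Dst a a = 0.
Proof. unfold Dst; rewrite meet_id; [lia| apply le_refl]. Qed.

Lemma adj_Dst a b : adj le a b -> Dst a b = 1.
Proof.
  intros [H|H]; [|rewrite Dst_comm]; have E := covers_rk H; destruct H as [[Hle _] _];
  unfold Dst; rewrite meet_id //; lia.
Qed.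

Lemma modular_ineq x y z : rk le (meet x y) + rk le (meet y z) <= rk le y + rk le (meet x z).
Proof.
  set A := meet x y. set B := meet y z.
  assert (HA : le A y) by apply meet_r. assert (HB : le B y) by apply meet_l.
  destruct (P1 (chain2 HA) (chain2 HB)) as [F [HF [HC HD]]].
  destruct (P0 HF) as [psi Hpsi].
  destruct (fi_surj Hpsi (HC A (or_introl erefl))) as [a Ha].
  destruct (fi_surj Hpsi (HD B (or_introl erefl))) as [b Hb].
  destruct (fi_surj Hpsi (HC y (or_intror erefl))) as [c Hc].
  assert (Hac : S2n_le a c) by (apply (fi_le Hpsi); rewrite Ha Hc; auto).
  assert (Hbc : S2n_le b c) by (apply (fi_le Hpsi); rewrite Hb Hc; auto).
  assert (Hcomp : compat a b) by (eapply ub_compat; eauto).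
  have Hm := sz_modular Hcomp. have Hj := sz_le (join_lub Hac Hbc).
  assert (HAB : le (meet A B) (meet x z)).
  { apply meet_glb; [apply le_trans with A; [apply meet_l| apply meet_l]|
                     apply le_trans with B; [apply meet_r| apply meet_r]]. }
  have := rk_mono HAB. rewrite -Ha -Hb -Hc (fi_meet HF Hpsi) !(rk_frame HF Hpsi). lia.
Qed.

Lemma tri a b c : Dst a c <= Dst a b + Dst b c.
Proof.
  unfold Dst. have := modular_ineq a b c.
  have := rk_mono (meet_l a b). have := rk_mono (meet_r a b).
  have := rk_mono (meet_l b c). have := rk_mono (meet_r b c).
  have := rk_mono (meet_l a c). have := rk_mono (meet_r a c). lia.
Qed.

Lemma walk_ge a l c : walk le a l c -> Dst a c <= length l.
Proof.
  revert a; induction l as [|y l IH]; intros a H; simpl in *.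
  - subst; rewrite Dst_self; lia.
  - destruct H as [H1 H2]. have := IH _ H2. have := adj_Dst H1. have := tri a y c. lia.
Qed.

Lemma walk_app a l1 b l2 c : walk le a l1 b -> walk le b l2 c -> walk le a (l1 ++ l2) c.
Proof.
  revert a; induction l1 as [|y l1 IH]; intros a H1 H2; simpl in *; [subst; auto|].
  destruct H1; split; eauto.
Qed.

Lemma walk_split a l c u : walk le a l c -> In u l ->
  exists l1 l2, walk le a l1 u /\ walk le u l2 c /\ length l1 + length l2 = length l.
Proof.
  revert a; induction l as [|y l IH]; intros a H Hu; [destruct Hu|].
  destruct H as [H1 H2]. destruct Hu as [<-|Hu].
  - exists (y :: nil), l; simpl; repeat split; auto.
  - destruct (IH y H2 Hu) as [l1 [l2 [W1 [W2 E]]]].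
    exists (y :: l1), l2; simpl; split; [split; auto|split; auto]. lia.
Qed.

Lemma walk_last a l b : walk le a l b -> l <> nil -> In b l.
Proof.
  revert a; induction l as [|y l IH]; intros a H Hne; [congruence|].
  destruct H as [H1 H2]. destruct l as [|z l]; simpl in *; [subst; auto|].
  right; apply (IH y); auto; congruence.
Qed.

Lemma walk_ex a c : exists l, walk le a l c /\ length l = Dst a c.
Proof.
  destruct (frame_of2 a c) as [F [psi [x [y [HF [Hpsi [<- <-]]]]]]].
  rewrite (Dst_frame HF Hpsi).
  remember (DD x y) as k eqn:Hk. revert x Hk; induction k as [|k IH]; intros x Hk.
  - exists nil; simpl; split; auto. rewrite (DD_zero (esym Hk)); auto.
  - assert (Hne : x <> y) by (intros ->; have := Dst_frame HF Hpsi y y; rewrite Dst_self; lia).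
    destruct (step Hne) as [x' [Hst Hd]].
    destruct (IH x' ltac:(lia)) as [l [W E]].
    exists (psi x' :: l); simpl; split; [split; auto|lia].
    destruct Hst as [[H1 H2]|[H1 H2]].
    + left; apply rk_covers; [apply (fi_le Hpsi); auto| rewrite !(rk_frame HF Hpsi); auto].
    + right; apply rk_covers; [apply (fi_le Hpsi); auto| rewrite !(rk_frame HF Hpsi); auto].
Qed.

Lemma Ipq_iff p q u : Ipq le p q u <-> Dst p u + Dst u q = Dst p q.
Proof.
  split.
  - intros [l [[W Hmin] Hu]].
    destruct (walk_ex p q) as [l0 [W0 E0]]. have := Hmin _ W0. have := walk_ge W.
    destruct Hu as [->|Hu].
    + rewrite Dst_self; lia.
    + destruct (walk_split W Hu) as [l1 [l2 [W1 [W2 E]]]].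
      have := walk_ge W1. have := walk_ge W2. have := tri p u q. lia.
  - intros E. destruct (walk_ex p u) as [l1 [W1 E1]]. destruct (walk_ex u q) as [l2 [W2 E2]].
    exists (l1 ++ l2). split; [split|].
    + eapply walk_app; eauto.
    + intros l' W'. have := walk_ge W'. rewrite app_length. lia.
    + destruct l1 as [|z l1]; [left; simpl in W1; auto|].
      right; apply in_or_app; left; apply (walk_last W1); congruence.
Qed.

Lemma onI_struct p q u : Dst p u + Dst u q = Dst p q ->
  le (meet p q) (meet u p) /\ le (meet p q) (meet u q) /\
  rk le (meet u p) + rk le (meet u q) = rk le u + rk le (meet p q) /\
  is_join le (meet u p) (meet u q) u.
Proof.
  intros E. set A := meet u p. set B := meet u q. set m := meet p q.
  assert (E' : rk le A + rk le B = rk le u + rk le m).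
  { move: E. unfold Dst. rewrite (meet_comm p u).
    have := rk_mono (meet_l u p). have := rk_mono (meet_r u p).
    have := rk_mono (meet_l u q). have := rk_mono (meet_r u q).
    have := rk_mono (meet_l p q). have := rk_mono (meet_r p q). fold A B m. lia. }
  assert (HA : le A u) by apply meet_l. assert (HB : le B u) by apply meet_l.
  destruct (P1 (chain2 HA) (chain2 HB)) as [F [HF [HC HD]]].
  destruct (P0 HF) as [psi Hpsi].
  destruct (fi_surj Hpsi (HC A (or_introl erefl))) as [a Ha].
  destruct (fi_surj Hpsi (HD B (or_introl erefl))) as [b Hb].
  destruct (fi_surj Hpsi (HC u (or_intror erefl))) as [c Hc].
  assert (Hac : S2n_le a c) by (apply (fi_le Hpsi); rewrite Ha Hc; auto).
  assert (Hbc : S2n_le b c) by (apply (fi_le Hpsi); rewrite Hb Hc; auto).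
  assert (Hcomp : compat a b) by (eapply ub_compat; eauto).
  have Hm := sz_modular Hcomp. have Hj := sz_le (join_lub Hac Hbc).
  assert (HAB : le (meet A B) m).
  { apply meet_glb; [apply le_trans with A; [apply meet_l| apply meet_r]|
                     apply le_trans with B; [apply meet_r| apply meet_r]]. }
  have Hr := rk_mono HAB.
  assert (Er : rk le (meet A B) = rk le m /\ sz (S2n_join a b) = sz c).
  { move: E' Hr. rewrite -Ha -Hb -Hc (fi_meet HF Hpsi) !(rk_frame HF Hpsi). lia. }
  destruct Er as [Er1 Er2].
  have EAB := rk_eq HAB Er1.
  have Ejc := sz_eq_le (join_lub Hac Hbc) Er2.
  split; [rewrite -EAB; apply meet_l|split; [rewrite -EAB; apply meet_r| split; auto]].
  rewrite -Ha -Hb -Hc -Ejc. apply (join_frame HF Hpsi); auto.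
Qed.

Lemma u0_indep F (psi : S2n n -> T) F' (psi' : S2n n -> T) x y x' y' :
  Frame F -> frame_iso le F psi -> Frame F' -> frame_iso le F' psi' ->
  psi x = psi' x' -> psi y = psi' y' -> psi (u0 x y) = psi' (u0 x' y').
Proof.
  intros HF Hpsi HF' Hpsi' Ex Ey. apply le_antisym.
  - apply (u0_max_L HF' Hpsi').
    + rewrite -Ey; apply (fi_le Hpsi); apply u0_le.
    + rewrite -Ex. exists (psi (S2n_join x (u0 x y))). apply (join_frame HF Hpsi); apply u0_compat.
  - apply (u0_max_L HF Hpsi).
    + rewrite Ey; apply (fi_le Hpsi'); apply u0_le.
    + rewrite Ex. exists (psi' (S2n_join x' (u0 x' y'))). apply (join_frame HF' Hpsi'); apply u0_compat.
Qed.

Lemma cc_indep F (psi : S2n n -> T) F' (psi' : S2n n -> T) x y x' y' :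
  Frame F -> frame_iso le F psi -> Frame F' -> frame_iso le F' psi' ->
  psi x = psi' x' -> psi y = psi' y' -> cc x y = cc x' y'.
Proof.
  intros HF Hpsi HF' Hpsi' Ex Ey. have E := u0_indep HF Hpsi HF' Hpsi' Ex Ey.
  have := sz_u0 x y. have := sz_u0 x' y'.
  have E1 := f_equal (rk le) E. rewrite (rk_frame HF Hpsi) (rk_frame HF' Hpsi') in E1.
  have E2 := f_equal (rk le) Ey. rewrite (rk_frame HF Hpsi) (rk_frame HF' Hpsi') in E2.
  lia.
Qed.

Section Frm2.
Variables (F : T -> Prop) (psi : S2n n -> T).
Hypothesis HF : Frame F.
Hypothesis Hpsi : frame_iso le F psi.

Lemma onI_bound x y u : Dst (psi x) u + Dst u (psi y) = Dst (psi x) (psi y) ->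
  rk le u + cc x y + sz (S2n_meet x y) <= sz x + sz y.
Proof.
  intros E. destruct (onI_struct E) as [_ [_ [_ Hj]]].
  set A := meet u (psi x). set B := meet u (psi y).
  assert (HA : le A (psi x)) by apply meet_r. assert (HB : le B (psi y)) by apply meet_r.
  destruct (P1 (chain2 HA) (chain2 HB)) as [G [HG [HC HD]]].
  destruct (P0 HG) as [psi' Hpsi'].
  destruct (fi_surj Hpsi' (HC A (or_introl erefl))) as [a Ha].
  destruct (fi_surj Hpsi' (HD B (or_introl erefl))) as [b Hb].
  destruct (fi_surj Hpsi' (HC _ (or_intror erefl))) as [x' Hx'].
  destruct (fi_surj Hpsi' (HD _ (or_intror erefl))) as [y' Hy'].
  fold A B in Hj. rewrite -Ha -Hb in Hj.
  have Eu := hj_join HG Hpsi' Hj.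
  assert (Hc : compat a b) by (apply (hj_compat HG Hpsi'); exists u; auto).
  assert (Hax : S2n_le a x') by (apply (fi_le Hpsi'); rewrite Ha Hx'; auto).
  assert (Hby : S2n_le b y') by (apply (fi_le Hpsi'); rewrite Hb Hy'; auto).
  have Hbd := bound_s Hax Hby Hc.
  have Ecc := cc_indep HF Hpsi HG Hpsi' (esym Hx') (esym Hy').
  have E1 := f_equal (rk le) Hx'. have E2 := f_equal (rk le) Hy'.
  have E3 := f_equal (rk le) (fi_meet HG Hpsi' x' y').
  rewrite Hx' Hy' (fi_meet HF Hpsi) in E3.
  rewrite !(rk_frame HG Hpsi') !(rk_frame HF Hpsi) in E1 E2 E3.
  rewrite Eu (rk_frame HG Hpsi'). lia.
Qed.

Lemma ident_L x y u : Dst (psi x) u + Dst u (psi y) = Dst (psi x) (psi y) ->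
  rk le (meet u (psi x)) = sz x -> rk le (meet u (psi y)) + cc x y = sz y ->
  u = psi (jL x y).
Proof.
  intros E H1 H2. destruct (onI_struct E) as [Hm1 [Hm2 [Hr Hj]]].
  assert (Ep : meet u (psi x) = psi x).
  { apply rk_eq; [apply meet_r| rewrite (rk_frame HF Hpsi); auto]. }
  rewrite Ep in Hj.
  set B := meet u (psi y). fold B in Hj, Hm2, H2, Hr.
  assert (HBU : le B (psi (u0 x y))).
  { apply (u0_max_L HF Hpsi); [apply meet_r| exists u; auto]. }
  assert (HJ : is_join le (psi x) (psi (u0 x y)) (psi (jL x y))).
  { rewrite -join_u0. apply (join_frame HF Hpsi); apply u0_compat. }
  assert (Hle : le u (psi (jL x y))).
  { destruct Hj as [_ [_ Hl]]. destruct HJ as [J1 [J2 _]]. apply Hl; auto.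
    apply le_trans with (psi (u0 x y)); auto. }
  apply rk_eq; auto.
  rewrite Ep (fi_meet HF Hpsi) !(rk_frame HF Hpsi) in Hr. rewrite (rk_frame HF Hpsi).
  have := sz_jL x y. lia.
Qed.

End Frm2.

Open Scope R_scope.

Lemma conv_lin p q (al be ga : R) :
  (forall u, Ipq le p q u -> al * fst (rvec le meet p q u) + be * snd (rvec le meet p q u) <= ga) ->
  forall z, ConvI le meet p q z -> al * fst z + be * snd z <= ga.
Proof.
  intros H z [l [Hl [Hs ->]]].
  assert (G : forall l, (forall t u, In (t, u) l -> 0 <= t /\ Ipq le p q u) ->
     al * fst (conv_sum le meet l p q) + be * snd (conv_sum le meet l p q) <= ga * fold_right Rplus 0 (map fst l)).
  { clear Hl Hs l. intros l; induction l as [|[t u] l IH]; intros Hl; simpl; [lra|].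
    destruct (Hl t u (or_introl erefl)) as [Ht Hu]. have := H u Hu.
    have := IH (fun t' u' Hi => Hl t' u' (or_intror Hi)). intros H1 H2.
    have : 0 <= t * (ga - (al * fst (rvec le meet p q u) + be * snd (rvec le meet p q u)))
      by (apply Rmult_le_pos; lra).
    set r := rvec le meet p q u in H1 H2 *. set cs := conv_sum le meet l p q in H1 H2 *.
    have -> : al * (t * fst r + fst cs) + be * (t * snd r + snd cs) =
      t * (al * fst r + be * snd r) + (al * fst cs + be * snd cs) by ring.
    have -> : ga * (t + fold_right Rplus 0 (map fst l)) = t * ga + ga * fold_right Rplus 0 (map fst l) by ring.
    lra. }
  have := G l Hl. rewrite Hs. lra.
Qed.

Lemma conv_pt p q u : Ipq le p q u -> ConvI le meet p q (rvec le meet p q u).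
Proof.
  intros H. exists ((1, u) :: nil). split; [intros t v [E|[]]; inversion E; subst; split; auto; lra|].
  split; simpl; [lra|]. unfold rvec; f_equal; ring.
Qed.

Lemma conv2 p q u1 u2 t : 0 <= t <= 1 -> Ipq le p q u1 -> Ipq le p q u2 ->
  ConvI le meet p q (t * fst (rvec le meet p q u1) + (1 - t) * fst (rvec le meet p q u2),
                     t * snd (rvec le meet p q u1) + (1 - t) * snd (rvec le meet p q u2)).
Proof.
  intros Ht H1 H2. exists ((t, u1) :: (1 - t, u2) :: nil).
  split; [intros t' v [E|[E|[]]]; inversion E; subst; split; auto; lra|].
  split; simpl; [lra|]. f_equal; ring.
Qed.

Lemma two_pt (a b v t : R) : 0 < t < 1 -> a <= v -> b <= v -> v = t * a + (1 - t) * b -> a = v /\ b = v.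
Proof. intros Ht Ha Hb E.
  have : 0 <= t * (v - a) by (apply Rmult_le_pos; lra).
  have : 0 <= (1 - t) * (v - b) by (apply Rmult_le_pos; lra).
  intros H1 H2.
  have E1 : t * (v - a) = 0 by nra. have E2 : (1 - t) * (v - b) = 0 by nra.
  apply Rmult_integral in E1; apply Rmult_integral in E2. split; lra.
Qed.

Section Poly.
Variables (F : T -> Prop) (psi : S2n n -> T) (x y : S2n n).
Hypothesis HF : Frame F.
Hypothesis Hpsi : frame_iso le F psi.

Let p := psi x.
Let q := psi y.
Let Lx := psi (jL x y).
Let Rx := psi (jL y x).
Definition A1 := INR (sz x) - INR (sz (S2n_meet x y)).
Definition B1 := INR (sz y) - INR (sz (S2n_meet x y)).
Definition Cc := INR (cc x y).
Definition VL := (A1, B1 - Cc).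
Definition VR := (A1 - Cc, B1).

Lemma rvec_L : rvec le meet p q Lx = VL.
Proof.
  unfold rvec, VL, A1, B1, Cc, p, q, Lx. rewrite !(fi_meet HF Hpsi) jL_meet_x jL_meet_y !(rk_frame HF Hpsi).
  have E := sz_u0 x y. f_equal. rewrite -E plus_INR. ring.
Qed.

Lemma rvec_R : rvec le meet p q Rx = VR.
Proof.
  unfold rvec, VR, A1, B1, Cc, p, q, Rx. rewrite !(fi_meet HF Hpsi) jL_meet_y jL_meet_x !(rk_frame HF Hpsi).
  have E := sz_u0 y x. rewrite cc_comm in E. f_equal. rewrite -E plus_INR. ring.
Qed.

Lemma onI_L : Ipq le p q Lx.
Proof. apply Ipq_iff. unfold p, q, Lx. rewrite !(Dst_frame HF Hpsi). apply DD_jL. Qed.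

Lemma onI_R : Ipq le p q Rx.
Proof. apply Ipq_iff. unfold p, q, Rx. rewrite !(Dst_frame HF Hpsi).
  have := DD_jL y x. rewrite (DD_comm y (jL y x)) (DD_comm (jL y x) x) (DD_comm y x). lia. Qed.

Lemma INR_sum a b c d : (a + b = c + d)%nat -> INR a + INR b = INR c + INR d.
Proof. intros E; rewrite -!plus_INR; f_equal; exact E. Qed.
Lemma INR_sum_le a b c d : (a + b <= c + d)%nat -> INR a + INR b <= INR c + INR d.
Proof. intros E; rewrite -!plus_INR; apply le_INR; apply/leP; exact E. Qed.
Lemma INR_le a b : (a <= b)%nat -> INR a <= INR b.
Proof. intros E; apply le_INR; apply/leP; auto. Qed.

Lemma Pbound u : Ipq le p q u ->
  fst (rvec le meet p q u) <= A1 /\ snd (rvec le meet p q u) <= B1 /\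
  fst (rvec le meet p q u) + snd (rvec le meet p q u) <= A1 + B1 - Cc.
Proof.
  intros H. apply Ipq_iff in H. destruct (onI_struct H) as [_ [_ [Hr _]]].
  have Hb := onI_bound HF Hpsi H.
  have H1 := rk_mono (meet_r u p). have H2 := rk_mono (meet_r u q).
  unfold rvec, A1, B1, Cc. simpl. unfold p, q in *.
  rewrite (fi_meet HF Hpsi) !(rk_frame HF Hpsi) in Hr H1 H2 |- *.
  apply INR_le in H1. apply INR_le in H2. apply INR_sum in Hr.
  have Hb' : (rk le u + cc x y + sz (S2n_meet x y) <= sz x + sz y + 0)%nat by lia.
  apply INR_sum_le in Hb'. rewrite !plus_INR in Hb'. simpl in Hb'. lra.
Qed.

Lemma Conv_P z : ConvI le meet p q z -> fst z <= A1 /\ snd z <= B1 /\ fst z + snd z <= A1 + B1 - Cc.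
Proof.
  intros Hz. split; [|split].
  - have := conv_lin (al := 1) (be := 0) (ga := A1) _ Hz. intros X; have := X ltac:(intros u Hu; have := Pbound Hu; lra). lra.
  - have := conv_lin (al := 0) (be := 1) (ga := B1) _ Hz. intros X; have := X ltac:(intros u Hu; have := Pbound Hu; lra). lra.
  - have := conv_lin (al := 1) (be := 1) (ga := A1 + B1 - Cc) _ Hz. intros X; have := X ltac:(intros u Hu; have := Pbound Hu; lra). lra.
Qed.

Lemma Cc_ge0 : 0 <= Cc.
Proof. apply pos_INR. Qed.

Lemma E_L : Epq le meet p q Lx.
Proof.
  split; [apply onI_L|]. rewrite rvec_L. split.
  - split; [rewrite -rvec_L; apply conv_pt; apply onI_L|].
    intros [a1 a2] [b1 b2] t Ha Hb Ht E. unfold VL in E. injection E; intros E2 E1; simpl in *.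
    destruct (Conv_P Ha) as [Ha1 [Ha2 Ha3]]. destruct (Conv_P Hb) as [Hb1 [Hb2 Hb3]]. simpl in *.
    destruct (two_pt Ht Ha1 Hb1 E1) as [-> ->].
    destruct (@two_pt a2 b2 (B1 - Cc) t Ht ltac:(lra) ltac:(lra) E2) as [-> ->]. auto.
  - split; [rewrite -rvec_L; apply conv_pt; apply onI_L|].
    intros [z1 z2] Hz H1 H2. destruct (Conv_P Hz) as [Q1 [Q2 Q3]]. unfold VL in *; simpl in *.
    f_equal; lra.
Qed.

Lemma E_R : Epq le meet p q Rx.
Proof.
  split; [apply onI_R|]. rewrite rvec_R. split.
  - split; [rewrite -rvec_R; apply conv_pt; apply onI_R|].
    intros [a1 a2] [b1 b2] t Ha Hb Ht E. unfold VR in E. injection E; intros E2 E1; simpl in *.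
    destruct (Conv_P Ha) as [Ha1 [Ha2 Ha3]]. destruct (Conv_P Hb) as [Hb1 [Hb2 Hb3]]. simpl in *.
    destruct (two_pt Ht Ha2 Hb2 E2) as [-> ->].
    destruct (@two_pt a1 b1 (A1 - Cc) t Ht ltac:(lra) ltac:(lra) E1) as [-> ->]. auto.
  - split; [rewrite -rvec_R; apply conv_pt; apply onI_R|].
    intros [z1 z2] Hz H1 H2. destruct (Conv_P Hz) as [Q1 [Q2 Q3]]. unfold VR in *; simpl in *.
    f_equal; lra.
Qed.

Lemma rk_m : rk le (meet p q) = sz (S2n_meet x y).
Proof. unfold p, q; rewrite (fi_meet HF Hpsi) (rk_frame HF Hpsi); auto. Qed.

Lemma VL_ident u : Ipq le p q u -> rvec le meet p q u = VL -> u = Lx.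
Proof.
  intros HI E. unfold rvec, VL, A1, B1, Cc in E. rewrite rk_m in E. injection E; intros E2 E1. unfold p, q in *.
  apply Ipq_iff in HI. apply (ident_L HF Hpsi HI).
  - apply INR_eq; lra.
  - apply INR_eq; rewrite plus_INR; lra.
Qed.

Lemma VR_ident u : Ipq le p q u -> rvec le meet p q u = VR -> u = Rx.
Proof.
  intros HI E. unfold rvec, VR, A1, B1, Cc in E. rewrite rk_m in E. injection E; intros E2 E1.
  apply Ipq_iff in HI. rewrite (Dst_comm p u) (Dst_comm u q) (Dst_comm p q) addnC in HI. unfold p, q in *.
  apply (ident_L HF Hpsi HI).
  - apply INR_eq; lra.
  - apply INR_eq; rewrite plus_INR cc_comm; lra.
Qed.

Lemma E_only u : Epq le meet p q u -> u = Lx \/ u = Rx.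
Proof.
  intros [HI [Hext Hcw]].
  destruct (Pbound HI) as [Q1 [Q2 Q3]].
  have CL : ConvI le meet p q VL by (rewrite -rvec_L; apply conv_pt; apply onI_L).
  have CR : ConvI le meet p q VR by (rewrite -rvec_R; apply conv_pt; apply onI_R).
  have Hc0 := Cc_ge0.
  set r := rvec le meet p q u in Q1 Q2 Q3 Hext Hcw *.
  destruct r as [X Y] eqn:Er. simpl in Q1, Q2, Q3.
  assert (HS : X + Y = A1 + B1 - Cc).
  { destruct (Rle_lt_dec (A1 + B1 - Cc) (X + Y)) as [|Hlt]; [lra|exfalso].
    destruct (Rle_lt_dec X (A1 - Cc)) as [HX|HX].
    - destruct Hcw as [_ Hcw]. have := Hcw VR CR. unfold VR; simpl. intros Z.
      have := Z ltac:(lra) ltac:(lra). intros W; injection W; lra.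
    - set X' := Rmin A1 (A1 + B1 - Cc - Y).
      have HX1 : X <= X' by (apply Rmin_glb; lra).
      have HX2 : X' <= A1 by apply Rmin_l.
      have HX3 : X' <= A1 + B1 - Cc - Y by apply Rmin_r.
      set t := (X' - (A1 - Cc)) / Cc.
      have HCp : 0 < Cc by lra.
      have Ht : t * Cc = X' - (A1 - Cc) by (unfold t; field; lra).
      have Ht0 : 0 <= t <= 1.
      { split; apply (Rmult_le_reg_r Cc); auto; lra. }
      have Cz := conv2 Ht0 onI_L onI_R. rewrite rvec_L rvec_R in Cz. unfold VL, VR in Cz; simpl in Cz.
      destruct Hcw as [_ Hcw]. have := Hcw _ Cz. simpl. intros Z.
      have := Z ltac:(nra) ltac:(nra). intros W; injection W; intros W2 W1. nra. }
  destruct (Req_dec X A1) as [EA|NA].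
  - left. apply VL_ident; auto. fold r; rewrite Er; unfold VL; f_equal; lra.
  - destruct (Req_dec X (A1 - Cc)) as [EC|NC].
    + right. apply VR_ident; auto. fold r; rewrite Er; unfold VR; f_equal; lra.
    + exfalso. have HCp : 0 < Cc by lra.
      set t := (X - (A1 - Cc)) / Cc.
      have Ht : t * Cc = X - (A1 - Cc) by (unfold t; field; lra).
      have Ht0 : 0 < t < 1.
      { split; apply (Rmult_lt_reg_r Cc); auto; lra. }
      destruct Hext as [_ Hext].
      have := Hext VL VR t CL CR Ht0. unfold VL, VR; simpl. intros Z.
      have := Z ltac:(f_equal; nra). intros [W _]. injection W; lra.
Qed.

Lemma Cc_pos : ~ compat x y -> 0 < Cc.
Proof. intros H; unfold Cc; apply lt_0_INR; apply/ltP; apply cc_pos; auto. Qed.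
Lemma Cc_zero : compat x y -> Cc = 0.
Proof. intros H; unfold Cc; rewrite cc_zero; auto. Qed.

Lemma Cone_L_nc : ~ compat x y -> forall w, Cone le meet p q Lx w <-> angle_cone (PI/4) 0 w.
Proof.
  intros Hc w. have HC := Cc_pos Hc. rewrite ac_PI4_0. unfold Cone. rewrite rvec_L.
  have CR : ConvI le meet p q VR by (rewrite -rvec_R; apply conv_pt; apply onI_R).
  destruct w as [w1 w2]; simpl. split.
  - intros [H1 [H2 H3]]; split; auto; split; auto. have := H3 VR CR. unfold dot, VL, VR; simpl. intros Z.
    apply (Rmult_le_reg_r Cc); auto; lra.
  - intros [H1 [H2 H3]]; split; auto; split; auto. intros [z1 z2] Hz.
    destruct (Conv_P Hz) as [Q1 [Q2 Q3]]. unfold dot, VL; simpl in *.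
    have : 0 <= (w1 - w2) * (A1 - z1) by (apply Rmult_le_pos; lra).
    have : 0 <= w2 * (A1 + B1 - Cc - z1 - z2) by (apply Rmult_le_pos; lra).
    intros; nra.
Qed.

Lemma Cone_R_nc : ~ compat x y -> forall w, Cone le meet p q Rx w <-> angle_cone (PI/2) (PI/4) w.
Proof.
  intros Hc w. have HC := Cc_pos Hc. rewrite ac_PI2_PI4. unfold Cone. rewrite rvec_R.
  have CL : ConvI le meet p q VL by (rewrite -rvec_L; apply conv_pt; apply onI_L).
  destruct w as [w1 w2]; simpl. split.
  - intros [H1 [H2 H3]]; split; auto; split; auto. have := H3 VL CL. unfold dot, VL, VR; simpl. intros Z.
    apply (Rmult_le_reg_r Cc); auto; lra.
  - intros [H1 [H2 H3]]; split; auto; split; auto. intros [z1 z2] Hz.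
    destruct (Conv_P Hz) as [Q1 [Q2 Q3]]. unfold dot, VR; simpl in *.
    have : 0 <= (w2 - w1) * (B1 - z2) by (apply Rmult_le_pos; lra).
    have : 0 <= w1 * (A1 + B1 - Cc - z1 - z2) by (apply Rmult_le_pos; lra).
    intros; nra.
Qed.

Lemma Cone_L_c : compat x y -> forall w, Cone le meet p q Lx w <-> angle_cone (PI/2) 0 w.
Proof.
  intros Hc w. have HC := Cc_zero Hc. rewrite ac_PI2_0. unfold Cone. rewrite rvec_L.
  destruct w as [w1 w2]; simpl. split.
  - intros [H1 [H2 H3]]; split; auto.
  - intros [H1 H2]; split; auto; split; auto. intros [z1 z2] Hz.
    destruct (Conv_P Hz) as [Q1 [Q2 Q3]]. unfold dot, VL; simpl in *.
    have : 0 <= w1 * (A1 - z1) by (apply Rmult_le_pos; lra).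
    have : 0 <= w2 * (B1 - z2) by (apply Rmult_le_pos; lra).
    intros; nra.
Qed.

Lemma coef_L_nc : ~ compat x y -> cone_coeff (Cone le meet p q Lx) = 1/2.
Proof.
  intros Hc. have := PI4_bounds. intros [B1' B2'].
  rewrite (@cone_coeff_val _ (PI/4) 0 ltac:(lra) B2' (Cone_L_nc Hc)) gq_PI4 gq_0. lra.
Qed.
Lemma coef_R_nc : ~ compat x y -> cone_coeff (Cone le meet p q Rx) = 1/2.
Proof.
  intros Hc. have := PI4_bounds. intros [B1' B2'].
  rewrite (@cone_coeff_val _ (PI/2) (PI/4) ltac:(lra) ltac:(lra) (Cone_R_nc Hc)) gq_PI4 gq_PI2. lra.
Qed.
Lemma coef_L_c : compat x y -> cone_coeff (Cone le meet p q Lx) = 1.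
Proof.
  intros Hc. have := PI4_bounds. intros [B1' B2'].
  rewrite (@cone_coeff_val _ (PI/2) 0 ltac:(lra) ltac:(lra) (Cone_L_c Hc)) gq_PI2 gq_0. lra.
Qed.

End Poly.

Lemma list1 (A : Type) (l : list A) a : NoDup l -> (forall u, In u l <-> u = a) -> l = a :: nil.
Proof.
  intros Hnd H. destruct l as [|z l]; [destruct ((proj2 (H a)) erefl)|].
  have Ez : z = a by apply H; left; auto. subst z.
  destruct l as [|w l]; auto. exfalso.
  have Ew : w = a by apply H; right; left; auto. subst w.
  inversion Hnd; subst. apply H2; left; auto.
Qed.

Lemma list2 (A : Type) (l : list A) a b : NoDup l -> (forall u, In u l <-> u = a \/ u = b) -> a <> b ->
  l = a :: b :: nil \/ l = b :: a :: nil.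
Proof.
  intros Hnd H Hab. destruct l as [|z l]; [destruct ((proj2 (H a)) (or_introl erefl))|].
  inversion Hnd as [|z' l' Hz Hnd']; subst.
  destruct l as [|w l].
  - exfalso. have Ea : z = a by (destruct ((proj2 (H a)) (or_introl erefl)) as [|[]]; auto).
    have Eb : z = b by (destruct ((proj2 (H b)) (or_intror erefl)) as [|[]]; auto). congruence.
  - inversion Hnd' as [|w' l'' Hw Hnd'']; subst.
    have Hz' := (proj1 (H z)) (or_introl erefl). have Hw' := (proj1 (H w)) (or_intror (or_introl erefl)).
    assert (Hzw : z <> w) by (intros E; apply Hz; left; auto).
    assert (Hl : l = nil).
    { destruct l as [|v l]; auto. exfalso. have Hv := (proj1 (H v)) (or_intror (or_intror (or_introl erefl))).
      assert (v <> z) by (intros E; apply Hz; right; left; auto).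
      assert (v <> w) by (intros E; apply Hw; left; auto).
      destruct Hz', Hw', Hv; congruence. }
    subst l. destruct Hz' as [-> | ->]; destruct Hw' as [-> | ->]; try congruence; auto.
Qed.

Lemma addE_scale1 a b : addE a (addE (scaleE 1 b) (Some 0)) = addE a b.
Proof. destruct a, b; simpl; auto; f_equal; ring. Qed.
Lemma sum2_comm h a b : addE (scaleE h a) (addE (scaleE h b) (Some 0)) = addE (scaleE h b) (addE (scaleE h a) (Some 0)).
Proof. destruct a, b; simpl; auto; f_equal; ring. Qed.

Definition SubP (f : T -> ER) p q := forall l, NoDup l -> (forall u, In u l <-> Epq le meet p q u) ->
  leE (addE (f (meet p q)) (sumE (map (sm_term le meet f p q) l))) (addE (f p) (f q)).

Lemma submod_iff f : submodular le meet f <-> forall p q, SubP f p q.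
Proof. unfold submodular, SubP; tauto. Qed.

Section Pair.
Variables (F : T -> Prop) (psi : S2n n -> T) (x y : S2n n).
Hypothesis HF : Frame F.
Hypothesis Hpsi : frame_iso le F psi.

Lemma E_char u : Epq le meet (psi x) (psi y) u <-> u = psi (jL x y) \/ u = psi (jL y x).
Proof.
  split; [apply (E_only HF Hpsi)|].
  intros [->| ->]; [apply (E_L x y HF Hpsi)| apply (E_R x y HF Hpsi)].
Qed.

Lemma sub_pair_c f : compat x y -> SubP f (psi x) (psi y) <->
  leE (addE (f (psi (S2n_meet x y))) (f (psi (S2n_join x y)))) (addE (f (psi x)) (f (psi y))).
Proof.
  intros Hc. have Hcoef := coef_L_c HF Hpsi Hc.
  have Hs : sm_term le meet f (psi x) (psi y) (psi (jL x y)) = scaleE 1 (f (psi (jL x y))).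
  { unfold sm_term. rewrite Hcoef. destruct (Req_EM_T 1 0); auto; lra. }
  have HE : forall u, Epq le meet (psi x) (psi y) u <-> u = psi (jL x y).
  { intros u; rewrite E_char (compat_jR Hc) -(compat_jL Hc). tauto. }
  unfold SubP. rewrite (fi_meet HF Hpsi) -(compat_jL Hc). split.
  - intros H. have := H (psi (jL x y) :: nil) ltac:(constructor; [intros []|constructor])
      ltac:(intros u; rewrite HE; simpl; intuition). simpl. rewrite Hs addE_scale1; auto.
  - intros H l Hnd Hl. rewrite (list1 Hnd (fun u => iff_trans (Hl u) (HE u))). simpl.
    rewrite Hs addE_scale1; auto.
Qed.

Lemma sub_pair_nc f : ~ compat x y -> SubP f (psi x) (psi y) <->
  leE (addE (f (psi (S2n_meet x y))) (addE (scaleE (1/2) (f (psi (jL x y))))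
        (addE (scaleE (1/2) (f (psi (jL y x)))) (Some 0)))) (addE (f (psi x)) (f (psi y))).
Proof.
  intros Hc.
  have Hs1 : sm_term le meet f (psi x) (psi y) (psi (jL x y)) = scaleE (1/2) (f (psi (jL x y))).
  { unfold sm_term. rewrite (coef_L_nc HF Hpsi Hc). destruct (Req_EM_T (1/2) 0); auto; lra. }
  have Hs2 : sm_term le meet f (psi x) (psi y) (psi (jL y x)) = scaleE (1/2) (f (psi (jL y x))).
  { unfold sm_term. rewrite (coef_R_nc HF Hpsi Hc). destruct (Req_EM_T (1/2) 0); auto; lra. }
  have Hne : psi (jL x y) <> psi (jL y x) by (intros E; apply (jL_neq Hc); apply (fi_inj Hpsi); auto).
  unfold SubP. rewrite (fi_meet HF Hpsi). split.
  - intros H. have := H (psi (jL x y) :: psi (jL y x) :: nil)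
      ltac:(constructor; [simpl; intuition| constructor; [intros []|constructor]])
      ltac:(intros u; rewrite E_char; simpl; intuition). simpl. rewrite Hs1 Hs2; auto.
  - intros H l Hnd Hl. destruct (list2 Hnd (fun u => iff_trans (Hl u) (E_char u)) Hne) as [-> | ->]; simpl;
    rewrite Hs1 Hs2; auto. rewrite sum2_comm; auto.
Qed.

End Pair.

Ltac er_solve f :=
  repeat match goal with
  | H : context [f ?a] |- _ => revert H
  end;
  repeat match goal with
  | |- context [f ?a] => destruct (f a)
  end; simpl; intros; try tauto; try lra.

Lemma sub_iff_pjoin f : submodular le meet f <-> pjoin_submodular le meet f.
Proof.
  rewrite submod_iff. split.
  - intros H p q. destruct (frame_of2 p q) as [F [psi [x [y [HF [Hpsi [<- <-]]]]]]].
    rewrite (fi_meet HF Hpsi) (pjoin_frame HF Hpsi).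
    destruct (classic (compat x y)) as [Hc|Hc].
    + apply (sub_pair_c HF Hpsi f Hc); auto.
    + have H1 := proj1 (sub_pair_nc HF Hpsi f Hc) (H _ _).
      have Hc' := ncompat_LR Hc.
      have H2 := proj1 (sub_pair_nc HF Hpsi f Hc') (H _ _).
      rewrite jL_meet_jR jL_jL jL_jL in H2.
      er_solve f.
  - intros H p q. destruct (frame_of2 p q) as [F [psi [x [y [HF [Hpsi [<- <-]]]]]]].
    destruct (classic (compat x y)) as [Hc|Hc].
    + apply (sub_pair_c HF Hpsi f Hc). have := H (psi x) (psi y).
      rewrite (fi_meet HF Hpsi) (pjoin_frame HF Hpsi); auto.
    + apply (sub_pair_nc HF Hpsi f Hc).
      have H1 := H (psi x) (psi y). rewrite (fi_meet HF Hpsi) (pjoin_frame HF Hpsi) in H1.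
      have H2 := H (psi x) (psi (S2n_join x y)). rewrite (fi_meet HF Hpsi) (pjoin_frame HF Hpsi) join_join in H2.
      have H3 := H (psi (S2n_meet x (S2n_join x y))) (psi y).
      rewrite (fi_meet HF Hpsi) (pjoin_frame HF Hpsi) join_Ma meet_Ma in H3.
      er_solve f.
Qed.

End PS.

Theorem theorem3p7 (T : Type) (le : T -> T -> Prop) (meet : T -> T -> T)
  (n : nat) (Frame : (T -> Prop) -> Prop)
  (HL : is_polar_space le meet n Frame) (f : T -> ER) :
  (submodular le meet f <-> pjoin_submodular le meet f) /\
  (pjoin_submodular le meet f <-> frame_bisubmodular le n Frame f).
Proof.
  split; [apply (sub_iff_pjoin HL)| apply (pjoin_iff_frame HL)].
Qed.
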